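(* Let $a,b,c,d,e\in\mathbb{R}$ and let $\alpha_i(t)$ ($i=1,\dots,5$) be arbitrary scalar continuous odd functions on $\mathbb{R}$. Consider the generalized Langford system $$\dot x=ax+by+xz,\quad \dot y=cx+dy+yz,\quad \dot z=ez-(x^2+y^2+z^2),\qquad (x,y,z)\in\mathbb{R}^3. \tag{L}$$ Then: (i) the Mironenko reflecting function of (L) coincides with that of the system $$\dot x=(ax+by+xz)(1+\alpha_1(t)),\quad \dot y=(cx+dy+yz)(1+\alpha_1(t)),\quad \dot z=\big(ez-(x^2+y^2+z^2)\big)(1+\alpha_1(t));$$ (ii) if $c=-b$, $d=a$, the Mironenko reflecting function of (L) coincides with that of the system $$\begin{aligned}\dot x&=(ax+by+xz)(1+\alpha_1(t))+x(a+z)\alpha_2(t)+y\alpha_3(t),\\ \dot y&=(-bx+ay+yz)(1+\alpha_1(t))+y(a+z)\alpha_2(t)-x\alpha_3(t),\\ \dot z&=(ez-x^2-y^2-z^2)(1+\alpha_1(t)+\alpha_2(t));\end{aligned}$$ (iii) if $c=-b$, $d=a$, $e=-2a$, the Mironenko reflecting function of (L) coincides with that of the system $$\begin{aligned}\dot x&=(ax+by+xz)(1+\alpha_1(t))+x(a+z)\alpha_2(t)+y\alpha_3(t)-y(x^2+y^2)(4az+x^2+y^2+2z^2)\alpha_4(t),\\ \dot y&=(-bx+ay+yz)(1+\alpha_1(t))+y(a+z)\alpha_2(t)-x\alpha_3(t)+x(x^2+y^2)(4az+x^2+y^2+2z^2)\alpha_4(t),\\ \dot z&=-(2az+x^2+y^2+z^2)(1+\alpha_1(t)+\alpha_2(t));\end{aligned}$$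 (iv) if $c=b=0$, $d=a$, $e=-2a$, the Mironenko reflecting function of (L) coincides with that of the system $$\begin{aligned}\dot x&=(ax+xz)(1+\alpha_1(t))+y\alpha_2(t)+y(4az+x^2+y^2+2z^2)\big(x^2\alpha_3(t)+xy\alpha_4(t)+y^2\alpha_5(t)\big),\\ \dot y&=(ay+yz)(1+\alpha_1(t))-x\alpha_2(t)-x(4az+x^2+y^2+2z^2)\big(x^2\alpha_3(t)+xy\alpha_4(t)+y^2\alpha_5(t)\big),\\ \dot z&=-(2az+x^2+y^2+z^2)(1+\alpha_1(t)).\end{aligned}$$
   Context: For a system $\dot x=X(t,x)$, $t\in\mathbb{R}$, $x\in D\subset\mathbb{R}^n$, with continuously differentiable right-hand side, let $x=\varphi(t;t_0,x_0)$ denote its general solution in Cauchy form (the solution with $\varphi(t_0;t_0,x_0)=x_0$). The Mironenko reflecting function (MRF) of the system is $F(t,x):=\varphi(-t;t,x)$, defined where this makes sense. *)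

(* Defs.v *)
From Stdlib Require Import Reals.
Open Scope R_scope.

(* A (nonautonomous) system  (x,y,z)' = X(t,x,y,z)  on R^3. *)
Definition system := R -> R -> R -> R -> R * R * R.

Definition cx (p : R * R * R) : R := fst (fst p).
Definition cy (p : R * R * R) : R := snd (fst p).
Definition cz (p : R * R * R) : R := snd p.

Definition is_solution (X : system) (lo hi : R) (u v w : R -> R) : Prop :=
  forall s, lo < s < hi ->
    derivable_pt_lim u s (cx (X s (u s) (v s) (w s))) /\
    derivable_pt_lim v s (cy (X s (u s) (v s) (w s))) /\
    derivable_pt_lim w s (cz (X s (u s) (v s) (w s))).

(* Graph of the Mironenko reflecting function F(t,p) := phi(-t; t, p):
   [MRF X t p q] holds iff the solution of X through (t,p) is defined on
   (a neighbourhood of) the whole segment between -t and t, and its value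
   at time -t is q.  (By uniqueness of solutions this relation is
   functional wherever it holds; it is exactly "F(t,p) is defined and
   equals q".) *)
Definition MRF (X : system) (t : R) (p q : R * R * R) : Prop :=
  exists (lo hi : R) (u v w : R -> R),
    lo < - Rabs t /\ Rabs t < hi /\
    is_solution X lo hi u v w /\
    u t = cx p /\ v t = cy p /\ w t = cz p /\
    u (- t) = cx q /\ v (- t) = cy q /\ w (- t) = cz q.

Definition same_MRF (X1 X2 : system) : Prop :=
  forall t p q1 q2, MRF X1 t p q1 -> MRF X2 t p q2 -> q1 = q2.

Definition odd_fun (f : R -> R) : Prop := forall t, f (- t) = - f t.

Definition langford (a b c d e : R) : system := fun t x y z =>
  (a*x + b*y + x*z,
   c*x + d*y + y*z,
   e*z - (x^2 + y^2 + z^2)).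

Definition sys_i (a b c d e : R) (al1 : R -> R) : system := fun t x y z =>
  ((a*x + b*y + x*z) * (1 + al1 t),
   (c*x + d*y + y*z) * (1 + al1 t),
   (e*z - (x^2 + y^2 + z^2)) * (1 + al1 t)).

Definition sys_ii (a b e : R) (al1 al2 al3 : R -> R) : system := fun t x y z =>
  ((a*x + b*y + x*z) * (1 + al1 t) + x*(a + z)*al2 t + y*al3 t,
   (- b*x + a*y + y*z) * (1 + al1 t) + y*(a + z)*al2 t - x*al3 t,
   (e*z - x^2 - y^2 - z^2) * (1 + al1 t + al2 t)).

Definition sys_iii (a b : R) (al1 al2 al3 al4 : R -> R) : system := fun t x y z =>
  ((a*x + b*y + x*z) * (1 + al1 t) + x*(a + z)*al2 t + y*al3 t
     - y*(x^2 + y^2)*(4*a*z + x^2 + y^2 + 2*z^2)*al4 t,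
   (- b*x + a*y + y*z) * (1 + al1 t) + y*(a + z)*al2 t - x*al3 t
     + x*(x^2 + y^2)*(4*a*z + x^2 + y^2 + 2*z^2)*al4 t,
   - (2*a*z + x^2 + y^2 + z^2) * (1 + al1 t + al2 t)).

Definition sys_iv (a : R) (al1 al2 al3 al4 al5 : R -> R) : system := fun t x y z =>
  ((a*x + x*z) * (1 + al1 t) + y*al2 t
     + y*(4*a*z + x^2 + y^2 + 2*z^2)*(x^2*al3 t + x*y*al4 t + y^2*al5 t),
   (a*y + y*z) * (1 + al1 t) - x*al2 t
     - x*(4*a*z + x^2 + y^2 + 2*z^2)*(x^2*al3 t + x*y*al4 t + y^2*al5 t),
   - (2*a*z + x^2 + y^2 + z^2) * (1 + al1 t)).

(* Main.v *)
Require Import Defs.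
From Stdlib Require Import Reals Lra Psatz.
From Coquelicot Require Import Coquelicot.
From Stdlib Require Import ClassicalEpsilon Classical.
Open Scope R_scope.

Lemma Rabs_le_inv a b : Rabs a <= b -> - b <= a <= b.
Proof. unfold Rabs; destruct (Rcase_abs a); lra. Qed.

Lemma dcont f x l : derivable_pt_lim f x l -> continuity_pt f x.
Proof. intro H. apply derivable_continuous_pt. exists l. exact H. Qed.

Lemma deriv_ext_loc f g x l lo hi : derivable_pt_lim f x l ->
  (forall y, lo < y < hi -> g y = f y) -> lo < x < hi -> derivable_pt_lim g x l.
Proof.
  intros H E Hx eps Heps. destruct (H eps Heps) as [d Hd].
  assert (Hp : 0 < Rmin d (Rmin (x - lo) (hi - x))).
  { destruct d as [d dp]; simpl. repeat apply Rmin_pos; lra. }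
  exists (mkposreal _ Hp). intros h Hh0 Hh. simpl in Hh.
  assert (Hm1 := Rmin_l d (Rmin (x - lo) (hi - x))).
  assert (Hm2 := Rmin_r d (Rmin (x - lo) (hi - x))).
  assert (Hm3 := Rmin_l (x - lo) (hi - x)).
  assert (Hm4 := Rmin_r (x - lo) (hi - x)).
  apply Rabs_def2 in Hh.
  rewrite (E x), (E (x+h)); try lra.
  apply Hd; auto. apply Rabs_def1; lra.
Qed.

Lemma const_deriv0 f lo hi a b : (forall r, lo < r < hi -> derivable_pt_lim f r 0) ->
  lo < a < hi -> lo < b < hi -> f a = f b.
Proof.
  intros H Ha Hb.
  destruct (Rtotal_order a b) as [Hab|[Hab|Hab]].
  - destruct (MVT_cor2 f (fun _ => 0) a b Hab) as [c [Hc _]].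
    { intros c Hc. apply H; lra. }
    lra.
  - subst; auto.
  - destruct (MVT_cor2 f (fun _ => 0) b a Hab) as [c [Hc _]].
    { intros c Hc. apply H; lra. }
    lra.
Qed.

Lemma dlin K c : derivable_pt_lim (fun r => K * r) c K.
Proof.
  intros eps Heps. exists (mkposreal eps Heps). intros h Hh _.
  replace ((K * (c + h) - K * c) / h - K) with 0 by (field; auto).
  rewrite Rabs_R0; auto.
Qed.

Lemma dexp_lin K c : derivable_pt_lim (fun r => exp (K * r)) c (exp (K*c) * K).
Proof.
  apply (derivable_pt_lim_comp (fun r => K * r) exp c K (exp (K*c))).
  - apply dlin.
  - apply derivable_pt_lim_exp.
Qed.

Lemma gronwall (D D' : R -> R) K m1 m2 s0 s :
  m1 <= s0 <= m2 -> m1 <= s <= m2 ->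
  (forall r, m1 <= r <= m2 -> derivable_pt_lim D r (D' r)) ->
  (forall r, m1 <= r <= m2 -> 0 <= D r /\ Rabs (D' r) <= K * D r) ->
  D s0 = 0 -> D s = 0.
Proof.
  intros H0 H1 HD HB Hs0.
  destruct (Rtotal_order s0 s) as [Hl|[He|Hl]].
  - set (f := fun r => D r * exp (- K * r)).
    destruct (MVT_cor2 f (fun r => D' r * exp (-K*r) + D r * (exp (-K*r) * (-K))) s0 s Hl)
      as [c [Hc Hc2]].
    { intros c Hc. unfold f. apply (derivable_pt_lim_mult D (fun r => exp (-K*r))). apply HD; lra.
      apply (dexp_lin (-K)). }
    unfold f in Hc. rewrite Hs0 in Hc.
    destruct (HB c) as [Hc0 Hc1]; [lra|]. destruct (HB s) as [Hs1 _]; [lra|].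
    apply Rabs_le_inv in Hc1.
    assert (exp (-K*c) > 0) by apply exp_pos.
    assert (exp (-K*s) > 0) by apply exp_pos.
    assert ((D' c * exp (- K * c) + D c * (exp (- K * c) * - K)) <= 0).
    { replace (D' c * exp (- K * c) + D c * (exp (- K * c) * - K)) with ((D' c - K * D c) * exp (-K*c)) by ring.
      assert (D' c - K * D c <= 0) by lra. nra. }
    assert (D s * exp (-K * s) <= 0) by nra. nra.
  - subst; auto.
  - set (f := fun r => D r * exp (K * r)).
    destruct (MVT_cor2 f (fun r => D' r * exp (K*r) + D r * (exp (K*r) * K)) s s0 Hl)
      as [c [Hc Hc2]].
    { intros c Hc. unfold f. apply (derivable_pt_lim_mult D (fun r => exp (K*r))). apply HD; lra.
      apply (dexp_lin K). }
    unfold f in Hc. rewrite Hs0 in Hc.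
    destruct (HB c) as [Hc0 Hc1]; [lra|]. destruct (HB s) as [Hs1 _]; [lra|].
    apply Rabs_le_inv in Hc1.
    assert (exp (K*c) > 0) by apply exp_pos.
    assert (exp (K*s) > 0) by apply exp_pos.
    assert ((D' c * exp (K * c) + D c * (exp (K * c) * K)) >= 0).
    { replace (D' c * exp (K * c) + D c * (exp (K * c) * K)) with ((D' c + K * D c) * exp (K*c)) by ring.
      apply Rle_ge, Rmult_le_pos; lra. }
    assert (D s * exp (K * s) <= 0) by nra. nra.
Qed.

Lemma bounded_on f m1 m2 : (forall r, m1 <= r <= m2 -> continuity_pt f r) ->
  exists B, forall r, m1 <= r <= m2 -> Rabs (f r) <= B.
Proof.
  intros H. destruct (Rle_dec m1 m2) as [Hm|Hm].
  - destruct (continuity_ab_maj (fun r => Rabs (f r)) m1 m2 Hm) as [c [Hc _]].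
    { intros r Hr. apply (continuity_pt_comp f Rabs). apply H; auto. apply Rcontinuity_abs. }
    exists (Rabs (f c)). auto.
  - exists 0. intros; lra.
Qed.

Definition LL (X : system) := forall A Rb, exists L, 0 <= L /\
  forall s x1 y1 z1 x2 y2 z2, Rabs s <= A ->
    Rabs x1 <= Rb -> Rabs y1 <= Rb -> Rabs z1 <= Rb ->
    Rabs x2 <= Rb -> Rabs y2 <= Rb -> Rabs z2 <= Rb ->
    Rabs (cx (X s x1 y1 z1) - cx (X s x2 y2 z2)) +
    Rabs (cy (X s x1 y1 z1) - cy (X s x2 y2 z2)) +
    Rabs (cz (X s x1 y1 z1) - cz (X s x2 y2 z2))
    <= L * (Rabs (x1 - x2) + Rabs (y1 - y2) + Rabs (z1 - z2)).

Definition nice (f : R -> R -> R -> R -> R) := forall A Rb, exists L M, 0 <= L /\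
  forall s x1 y1 z1 x2 y2 z2, Rabs s <= A ->
    Rabs x1 <= Rb -> Rabs y1 <= Rb -> Rabs z1 <= Rb ->
    Rabs x2 <= Rb -> Rabs y2 <= Rb -> Rabs z2 <= Rb ->
    Rabs (f s x1 y1 z1) <= M /\
    Rabs (f s x1 y1 z1 - f s x2 y2 z2) <= L * (Rabs (x1 - x2) + Rabs (y1 - y2) + Rabs (z1 - z2)).

Ltac nintro := intros s x1 y1 z1 x2 y2 z2 Hs Hx1 Hy1 Hz1 Hx2 Hy2 Hz2.

Lemma nice_const c : nice (fun _ _ _ _ => c).
Proof.
  intros A Rb. exists 0, (Rabs c). split; [lra|]. nintro. split; [lra|].
  unfold Rminus. rewrite Rplus_opp_r, Rabs_R0.
  assert (0 <= Rabs (x1 + - x2) + Rabs (y1 + - y2) + Rabs (z1 + - z2)).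
  { assert (H1 := Rabs_pos (x1 + - x2)). assert (H2 := Rabs_pos (y1 + - y2)).
    assert (H3 := Rabs_pos (z1 + - z2)). lra. }
  lra.
Qed.

Lemma nice_x : nice (fun _ x _ _ => x).
Proof.
  intros A Rb. exists 1, Rb. split; [lra|]. nintro. split; [lra|].
  assert (H2 := Rabs_pos (y1 - y2)). assert (H3 := Rabs_pos (z1 - z2)). lra.
Qed.
Lemma nice_y : nice (fun _ _ y _ => y).
Proof.
  intros A Rb. exists 1, Rb. split; [lra|]. nintro. split; [lra|].
  assert (H2 := Rabs_pos (x1 - x2)). assert (H3 := Rabs_pos (z1 - z2)). lra.
Qed.
Lemma nice_z : nice (fun _ _ _ z => z).
Proof.
  intros A Rb. exists 1, Rb. split; [lra|]. nintro. split; [lra|].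
  assert (H2 := Rabs_pos (y1 - y2)). assert (H3 := Rabs_pos (x1 - x2)). lra.
Qed.

Lemma nice_t h : continuity h -> nice (fun s _ _ _ => h s).
Proof.
  intros Hh A Rb. destruct (bounded_on h (-A) A) as [B HB].
  { intros; apply Hh. }
  exists 0, B. split; [lra|]. nintro. split.
  - apply HB. apply Rabs_le_inv in Hs. lra.
  - unfold Rminus. rewrite Rplus_opp_r, Rabs_R0.
    assert (H1 := Rabs_pos (x1 + - x2)). assert (H2 := Rabs_pos (y1 + - y2)).
    assert (H3 := Rabs_pos (z1 + - z2)). lra.
Qed.

Lemma nice_plus f g : nice f -> nice g -> nice (fun s x y z => f s x y z + g s x y z).
Proof.
  intros Hf Hg A Rb. destruct (Hf A Rb) as [L1 [M1 [HL1 H1]]].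
  destruct (Hg A Rb) as [L2 [M2 [HL2 H2]]].
  exists (L1 + L2), (M1 + M2). split; [lra|]. nintro.
  destruct (H1 s x1 y1 z1 x2 y2 z2) as [Ha Hb]; auto.
  destruct (H2 s x1 y1 z1 x2 y2 z2) as [Hc Hd]; auto.
  split.
  - eapply Rle_trans. apply Rabs_triang. lra.
  - replace (f s x1 y1 z1 + g s x1 y1 z1 - (f s x2 y2 z2 + g s x2 y2 z2))
      with ((f s x1 y1 z1 - f s x2 y2 z2) + (g s x1 y1 z1 - g s x2 y2 z2)) by ring.
    eapply Rle_trans. apply Rabs_triang. lra.
Qed.

Lemma nice_opp f : nice f -> nice (fun s x y z => - f s x y z).
Proof.
  intros Hf A Rb. destruct (Hf A Rb) as [L1 [M1 [HL1 H1]]].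
  exists L1, M1. split; [lra|]. nintro.
  destruct (H1 s x1 y1 z1 x2 y2 z2) as [Ha Hb]; auto.
  rewrite Rabs_Ropp. split; auto.
  replace (- f s x1 y1 z1 - - f s x2 y2 z2) with (- (f s x1 y1 z1 - f s x2 y2 z2)) by ring.
  rewrite Rabs_Ropp. auto.
Qed.

Lemma nice_minus f g : nice f -> nice g -> nice (fun s x y z => f s x y z - g s x y z).
Proof.
  intros Hf Hg. apply (nice_plus f (fun s x y z => - g s x y z)); auto. apply nice_opp; auto.
Qed.

Lemma prod_bound a a' b b' M1 M2 L1 L2 d :
  Rabs a <= M1 -> Rabs b' <= M2 -> Rabs (a - a') <= L1 * d -> Rabs (b - b') <= L2 * d ->
  0 <= d ->
  Rabs (a * b - a' * b') <= (M1 * L2 + M2 * L1) * d.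
Proof.
  intros H1 H2 H3 H4 Hd.
  replace (a * b - a' * b') with (a * (b - b') + b' * (a - a')) by ring.
  eapply Rle_trans. apply Rabs_triang. rewrite !Rabs_mult.
  assert (HM1 : 0 <= M1) by (eapply Rle_trans; [apply Rabs_pos|eauto]).
  assert (HM2 : 0 <= M2) by (eapply Rle_trans; [apply Rabs_pos|eauto]).
  assert (Rabs a * Rabs (b - b') <= M1 * (L2 * d)).
  { apply Rmult_le_compat; auto using Rabs_pos. }
  assert (Rabs b' * Rabs (a - a') <= M2 * (L1 * d)).
  { apply Rmult_le_compat; auto using Rabs_pos. }
  lra.
Qed.

Lemma nice_mult f g : nice f -> nice g -> nice (fun s x y z => f s x y z * g s x y z).
Proof.
  intros Hf Hg A Rb. destruct (Hf A Rb) as [L1 [M1 [HL1 H1]]].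
  destruct (Hg A Rb) as [L2 [M2 [HL2 H2]]].
  exists (Rabs M1 * L2 + Rabs M2 * L1), (M1 * M2). split.
  { assert (H0 := Rabs_pos M1). assert (H0' := Rabs_pos M2). nra. }
  nintro.
  destruct (H1 s x1 y1 z1 x2 y2 z2) as [Ha Hb]; auto.
  destruct (H2 s x1 y1 z1 x2 y2 z2) as [Hc Hd]; auto.
  destruct (H2 s x2 y2 z2 x2 y2 z2) as [Hc' _]; auto.
  split.
  - rewrite Rabs_mult. apply Rmult_le_compat; auto using Rabs_pos.
  - apply prod_bound.
    + eapply Rle_trans; [apply Ha| apply RRle_abs].
    + eapply Rle_trans; [apply Hc'| apply RRle_abs].
    + auto.
    + auto.
    + assert (Q1 := Rabs_pos (x1 - x2)). assert (Q2 := Rabs_pos (y1 - y2)).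
      assert (Q3 := Rabs_pos (z1 - z2)). lra.
Qed.

Lemma nice_pow f n : nice f -> nice (fun s x y z => f s x y z ^ n).
Proof.
  intros Hf. induction n as [|n IH].
  - simpl. apply nice_const.
  - simpl. apply (nice_mult f (fun s x y z => f s x y z ^ n)); auto.
Qed.

Ltac solve_nice :=
  repeat first
    [ apply nice_x | apply nice_y | apply nice_z | apply nice_const
    | apply nice_plus | apply nice_minus | apply nice_opp | apply nice_mult
    | apply nice_pow
    | (apply nice_t; assumption) ].

Lemma LL_of_nice X :
  nice (fun s x y z => cx (X s x y z)) -> nice (fun s x y z => cy (X s x y z)) ->
  nice (fun s x y z => cz (X s x y z)) -> LL X.
Proof.
  intros H1 H2 H3 A Rb.
  destruct (H1 A Rb) as [L1 [M1 [HL1 G1]]].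
  destruct (H2 A Rb) as [L2 [M2 [HL2 G2]]].
  destruct (H3 A Rb) as [L3 [M3 [HL3 G3]]].
  exists (L1 + L2 + L3). split; [lra|]. nintro.
  destruct (G1 s x1 y1 z1 x2 y2 z2) as [_ K1]; auto.
  destruct (G2 s x1 y1 z1 x2 y2 z2) as [_ K2]; auto.
  destruct (G3 s x1 y1 z1 x2 y2 z2) as [_ K3]; auto.
  lra.
Qed.

Lemma dsq f g r a b : derivable_pt_lim f r a -> derivable_pt_lim g r b ->
  derivable_pt_lim (fun r => (f r - g r) * (f r - g r)) r (2 * (f r - g r) * (a - b)).
Proof.
  intros Hf Hg.
  assert (H := derivable_pt_lim_minus f g r a b Hf Hg).
  assert (H2 := derivable_pt_lim_mult (fun r => f r - g r) (fun r => f r - g r) r _ _ H H).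
  replace (2 * (f r - g r) * (a - b)) with ((a - b) * (f r - g r) + (f r - g r) * (a - b)) by ring.
  exact H2.
Qed.

Lemma uniq X lo hi u1 v1 w1 u2 v2 w2 s0 s : LL X ->
  is_solution X lo hi u1 v1 w1 -> is_solution X lo hi u2 v2 w2 ->
  lo < s0 < hi -> lo < s < hi ->
  u1 s0 = u2 s0 -> v1 s0 = v2 s0 -> w1 s0 = w2 s0 ->
  u1 s = u2 s /\ v1 s = v2 s /\ w1 s = w2 s.
Proof.
  intros HL S1 S2 Hs0 Hs E1 E2 E3.
  set (m1 := Rmin s0 s). set (m2 := Rmax s0 s).
  assert (Hm1 := Rmin_l s0 s). assert (Hm2 := Rmin_r s0 s).
  assert (Hm3 := Rmax_l s0 s). assert (Hm4 := Rmax_r s0 s).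
  assert (Hm5 : lo < m1) by (unfold m1, Rmin; destruct Rle_dec; lra).
  assert (Hm6 : m2 < hi) by (unfold m2, Rmax; destruct Rle_dec; lra).
  fold m1 m2 in Hm1, Hm2, Hm3, Hm4.
  assert (C : forall f, (forall r, lo < r < hi -> exists l, derivable_pt_lim f r l) ->
     exists B, 0 <= B /\ forall r, m1 <= r <= m2 -> Rabs (f r) <= B).
  { intros f Hf. destruct (bounded_on f m1 m2) as [B HB].
    { intros r Hr. destruct (Hf r) as [l Hl]; [lra|]. eapply dcont; eauto. }
    exists (Rabs B). split; [apply Rabs_pos|]. intros r Hr. eapply Rle_trans; [apply HB; auto|apply RRle_abs]. }
  destruct (C u1) as [B1 [P1 Q1]]. { intros r Hr; destruct (S1 r Hr) as [H _]; eauto. }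
  destruct (C v1) as [B2 [P2 Q2]]. { intros r Hr; destruct (S1 r Hr) as [_ [H _]]; eauto. }
  destruct (C w1) as [B3 [P3 Q3]]. { intros r Hr; destruct (S1 r Hr) as [_ [_ H]]; eauto. }
  destruct (C u2) as [B4 [P4 Q4]]. { intros r Hr; destruct (S2 r Hr) as [H _]; eauto. }
  destruct (C v2) as [B5 [P5 Q5]]. { intros r Hr; destruct (S2 r Hr) as [_ [H _]]; eauto. }
  destruct (C w2) as [B6 [P6 Q6]]. { intros r Hr; destruct (S2 r Hr) as [_ [_ H]]; eauto. }
  set (Rb := B1 + B2 + B3 + B4 + B5 + B6).
  destruct (HL (Rabs m1 + Rabs m2) Rb) as [L [HL0 HLL]].
  set (D := fun r => (u1 r - u2 r) * (u1 r - u2 r) + (v1 r - v2 r) * (v1 r - v2 r)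
                   + (w1 r - w2 r) * (w1 r - w2 r)).
  set (f1 := fun r => cx (X r (u1 r) (v1 r) (w1 r))).
  set (g1 := fun r => cy (X r (u1 r) (v1 r) (w1 r))).
  set (h1 := fun r => cz (X r (u1 r) (v1 r) (w1 r))).
  set (f2 := fun r => cx (X r (u2 r) (v2 r) (w2 r))).
  set (g2 := fun r => cy (X r (u2 r) (v2 r) (w2 r))).
  set (h2 := fun r => cz (X r (u2 r) (v2 r) (w2 r))).
  set (D' := fun r => 2 * (u1 r - u2 r) * (f1 r - f2 r) + 2 * (v1 r - v2 r) * (g1 r - g2 r)
                    + 2 * (w1 r - w2 r) * (h1 r - h2 r)).
  assert (HD0 : D s = 0).
  { apply (gronwall D D' (6 * L) m1 m2 s0 s); try lra.
    - intros r Hr. destruct (S1 r) as [A1 [A2 A3]]; [lra|].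
      destruct (S2 r) as [B1' [B2' B3']]; [lra|].
      unfold D, D'.
      apply derivable_pt_lim_plus; [apply derivable_pt_lim_plus|]; apply dsq; auto.
    - intros r Hr. unfold D, D'.
      set (a1 := u1 r - u2 r). set (a2 := v1 r - v2 r). set (a3 := w1 r - w2 r).
      set (p1 := f1 r - f2 r). set (p2 := g1 r - g2 r). set (p3 := h1 r - h2 r).
      assert (HB : Rabs p1 + Rabs p2 + Rabs p3 <= L * (Rabs a1 + Rabs a2 + Rabs a3)).
      { unfold p1, p2, p3, a1, a2, a3, f1, f2, g1, g2, h1, h2. apply HLL.
        - apply Rabs_le. split.
          + assert (Hx := Rabs_pos m1). assert (Hy := Rabs_pos m2).
            assert (Hz := Rle_abs (- m1)). rewrite Rabs_Ropp in Hz. lra.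
          + assert (Hx := Rabs_pos m1). assert (Hy := Rle_abs m2). lra.
        - assert (T := Q1 r Hr). unfold Rb; lra.
        - assert (T := Q2 r Hr). unfold Rb; lra.
        - assert (T := Q3 r Hr). unfold Rb; lra.
        - assert (T := Q4 r Hr). unfold Rb; lra.
        - assert (T := Q5 r Hr). unfold Rb; lra.
        - assert (T := Q6 r Hr). unfold Rb; lra. }
      split; [nra|].
      assert (T1 : Rabs (2 * a1 * p1 + 2 * a2 * p2 + 2 * a3 * p3)
                   <= 2 * (Rabs a1 * Rabs p1 + Rabs a2 * Rabs p2 + Rabs a3 * Rabs p3)).
      { eapply Rle_trans. apply Rabs_triang. eapply Rle_trans. apply Rplus_le_compat_r. apply Rabs_triang.
        rewrite !Rabs_mult. rewrite Rabs_right by lra. lra. }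
      assert (Z1 := Rabs_pos a1). assert (Z2 := Rabs_pos a2). assert (Z3 := Rabs_pos a3).
      assert (Y1 := Rabs_pos p1). assert (Y2 := Rabs_pos p2). assert (Y3 := Rabs_pos p3).
      assert (T2 : Rabs a1 * Rabs p1 + Rabs a2 * Rabs p2 + Rabs a3 * Rabs p3 <=
                   (Rabs a1 + Rabs a2 + Rabs a3) * (Rabs p1 + Rabs p2 + Rabs p3)) by nra.
      assert (T3 : (Rabs a1 + Rabs a2 + Rabs a3) * (Rabs p1 + Rabs p2 + Rabs p3) <=
                   (Rabs a1 + Rabs a2 + Rabs a3) * (L * (Rabs a1 + Rabs a2 + Rabs a3))).
      { apply Rmult_le_compat_l; lra. }
      assert (W1 : Rabs a1 * Rabs a1 = a1 * a1) by (rewrite <- Rabs_mult; apply Rabs_right; nra).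
      assert (W2 : Rabs a2 * Rabs a2 = a2 * a2) by (rewrite <- Rabs_mult; apply Rabs_right; nra).
      assert (W3 : Rabs a3 * Rabs a3 = a3 * a3) by (rewrite <- Rabs_mult; apply Rabs_right; nra).
      assert (T4 : (Rabs a1 + Rabs a2 + Rabs a3) * (Rabs a1 + Rabs a2 + Rabs a3) <=
                   3 * (a1 * a1 + a2 * a2 + a3 * a3)).
      { rewrite <- W1, <- W2, <- W3.
        assert (0 <= (Rabs a1 - Rabs a2) * (Rabs a1 - Rabs a2)) by apply Rle_0_sqr.
        assert (0 <= (Rabs a1 - Rabs a3) * (Rabs a1 - Rabs a3)) by apply Rle_0_sqr.
        assert (0 <= (Rabs a3 - Rabs a2) * (Rabs a3 - Rabs a2)) by apply Rle_0_sqr.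
        lra. }
      assert (T5 : (Rabs a1 + Rabs a2 + Rabs a3) * (L * (Rabs a1 + Rabs a2 + Rabs a3)) <=
                   L * (3 * (a1 * a1 + a2 * a2 + a3 * a3))).
      { replace ((Rabs a1 + Rabs a2 + Rabs a3) * (L * (Rabs a1 + Rabs a2 + Rabs a3))) with
          (L * ((Rabs a1 + Rabs a2 + Rabs a3) * (Rabs a1 + Rabs a2 + Rabs a3))) by ring.
        apply Rmult_le_compat_l; lra. }
      lra.
    - unfold D. rewrite E1, E2, E3. ring. }
  unfold D in HD0.
  assert (K1 := Rle_0_sqr (u1 s - u2 s)). assert (K2 := Rle_0_sqr (v1 s - v2 s)).
  assert (K3 := Rle_0_sqr (w1 s - w2 s)). unfold Rsqr in K1, K2, K3.
  assert (G1 : (u1 s - u2 s) * (u1 s - u2 s) = 0) by lra.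
  assert (G2 : (v1 s - v2 s) * (v1 s - v2 s) = 0) by lra.
  assert (G3 : (w1 s - w2 s) * (w1 s - w2 s) = 0) by lra.
  apply Rmult_integral in G1. apply Rmult_integral in G2. apply Rmult_integral in G3.
  split; [|split]; lra.
Qed.

Lemma Rabs_sub_le a b : Rabs (a - b) <= Rabs a + Rabs b.
Proof. unfold Rminus; eapply Rle_trans; [apply Rabs_triang|]; rewrite Rabs_Ropp; lra. Qed.

Lemma lip_cont g K : (forall s s', Rabs (g s - g s') <= K * Rabs (s - s')) ->
  forall z, continuity_pt g z.
Proof.
  intros H z eps Heps. exists (eps / (Rabs K + 1)). split.
  { apply Rdiv_lt_0_compat; [lra|]. assert (T:=Rabs_pos K); lra. }
  intros x [_ Hx]. simpl in *. unfold R_dist in *.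
  eapply Rle_lt_trans. apply H.
  assert (T:=Rabs_pos K). assert (T2 := Rabs_pos (x - z)).
  assert (K * Rabs (x - z) <= Rabs K * Rabs (x - z)).
  { apply Rmult_le_compat_r; auto. apply RRle_abs. }
  assert (Rabs K * Rabs (x - z) < eps).
  { apply Rle_lt_trans with ((Rabs K + 1) * Rabs (x - z)). nra.
    replace eps with ((Rabs K + 1) * (eps / (Rabs K + 1))) by (field; lra).
    apply Rmult_lt_compat_l; lra. }
  lra.
Qed.

Lemma cont_C g z : continuity_pt g z -> continuous g z.
Proof. intro H. apply continuity_pt_filterlim. exact H. Qed.

Lemma exRInt_cont g a b : (forall z, continuity_pt g z) -> ex_RInt g a b.
Proof. intros H. apply (ex_RInt_continuous (V := R_CompleteNormedModule)). intros; apply cont_C; auto. Qed.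

Lemma Chasles_R f a b c : ex_RInt f a b -> ex_RInt f b c -> RInt f a b + RInt f b c = RInt f a c.
Proof. intros; apply (RInt_Chasles f a b c); auto. Qed.

Lemma minus_R f g a b : ex_RInt f a b -> ex_RInt g a b ->
  RInt (fun x => f x - g x) a b = RInt f a b - RInt g a b.
Proof. intros; apply (RInt_minus f g a b); auto. Qed.

Lemma const_R c a b : RInt (fun _ => c) a b = (b - a) * c.
Proof. apply (RInt_const a b c). Qed.

Lemma point_R f a : RInt f a a = 0.
Proof. apply (RInt_point a f). Qed.

Lemma swap_R f a b : ex_RInt f a b -> RInt f b a = - RInt f a b.
Proof. intros H. rewrite <- (opp_RInt_swap f a b H). reflexivity. Qed.

Lemma RInt_bound h a b K : ex_RInt h a b ->
  (forall r, Rmin a b <= r <= Rmax a b -> Rabs (h r) <= K) ->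
  Rabs (RInt h a b) <= K * Rabs (b - a).
Proof.
  intros Hi Hb. destruct (Rle_dec a b) as [Hab|Hab].
  - assert (T := abs_RInt_le_const h a b K Hab Hi).
    rewrite (Rabs_right (b - a)) by lra.
    replace (K * (b - a)) with ((b - a) * K) by ring. apply T.
    intros r Hr. apply Hb. rewrite Rmin_left, Rmax_right; lra.
  - rewrite swap_R, Rabs_Ropp.
    2: { apply ex_RInt_swap; auto. }
    assert (T := abs_RInt_le_const h b a K ltac:(lra) (ex_RInt_swap _ _ _ Hi)).
    replace (b - a) with (- (a - b)) by ring. rewrite Rabs_Ropp, (Rabs_right (a - b)) by lra.
    replace (K * (a - b)) with ((a - b) * K) by ring. apply T.
    intros r Hr. apply Hb. rewrite Rmin_right, Rmax_left; lra.
Qed.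

Lemma small_pow C : 0 <= C -> forall eps, 0 < eps -> exists n, C * (1/2)^n < eps.
Proof.
  intros HC eps He.
  destruct (pow_lt_1_zero (1/2) ltac:(rewrite Rabs_right; lra) (eps / (C + 1))) as [N HN].
  { apply Rdiv_lt_0_compat; lra. }
  exists N. specialize (HN N (Nat.le_refl N)).
  rewrite Rabs_right in HN. 2: { apply Rle_ge, pow_le; lra. }
  assert (0 <= (1/2)^N) by (apply pow_le; lra).
  apply Rle_lt_trans with ((C + 1) * (1/2)^N). nra.
  replace eps with ((C + 1) * (eps / (C + 1))) by (field; lra).
  apply Rmult_lt_compat_l; lra.
Qed.

Lemma le_pow a b C : 0 <= C -> (forall n, a <= b + C * (1/2)^n) -> a <= b.
Proof.
  intros HC H. apply le_epsilon. intros eps He.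
  destruct (small_pow C HC eps He) as [n Hn]. specialize (H n). lra.
Qed.

Lemma cauchy_lim (u : nat -> R) : (forall n m, (n <= m)%nat -> Rabs (u m - u n) <= 2 * (1/2)^n) ->
  exists l, forall n, Rabs (l - u n) <= 2 * (1/2)^n.
Proof.
  intros H.
  assert (Cc : Cauchy_crit u).
  { intros eps He. destruct (small_pow 4 ltac:(lra) eps He) as [N HN].
    exists N. intros n m Hn Hm. unfold R_dist.
    assert (A1 := H N n Hn). assert (A2 := H N m Hm).
    replace (u n - u m) with ((u n - u N) - (u m - u N)) by ring.
    eapply Rle_lt_trans. apply Rabs_sub_le. lra. }
  destruct (Rcomplete.R_complete u Cc) as [l Hl].
  exists l. intros n. apply le_epsilon. intros eps He.
  destruct (Hl eps He) as [N HN].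
  specialize (HN (Nat.max n N) (Nat.le_max_r _ _)). unfold R_dist in HN.
  specialize (H n (Nat.max n N) (Nat.le_max_l _ _)).
  replace (l - u n) with ((u (Nat.max n N) - u n) - (u (Nat.max n N) - l)) by ring.
  eapply Rle_trans. apply Rabs_sub_le. lra.
Qed.

Lemma ex_fun {A B : Type} (P : A -> B -> Prop) : (forall a, exists b, P a b) -> exists f, forall a, P a (f a).
Proof.
  intros H. exists (fun a => proj1_sig (constructive_indefinite_description _ (H a))).
  intros a. exact (proj2_sig (constructive_indefinite_description _ (H a))).
Qed.

Lemma deriv_quad g s l K lo hi : lo < s < hi ->
  (forall s', lo < s' < hi -> Rabs (g s' - g s - (s' - s) * l) <= K * ((s' - s) * (s' - s))) ->
  derivable_pt_lim g s l.
Proof.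
  intros Hs H eps He.
  assert (Hp : 0 < Rmin (eps / (Rabs K + 1)) (Rmin (s - lo) (hi - s))).
  { repeat apply Rmin_pos; try lra. apply Rdiv_lt_0_compat; [lra|]. assert (T:=Rabs_pos K); lra. }
  exists (mkposreal _ Hp). intros h Hh0 Hh. simpl in Hh.
  assert (Hm1 := Rmin_l (eps / (Rabs K + 1)) (Rmin (s - lo) (hi - s))).
  assert (Hm2 := Rmin_r (eps / (Rabs K + 1)) (Rmin (s - lo) (hi - s))).
  assert (Hm3 := Rmin_l (s - lo) (hi - s)).
  assert (Hm4 := Rmin_r (s - lo) (hi - s)).
  assert (Hb := Rabs_def2 h _ Hh).
  specialize (H (s + h) ltac:(lra)).
  replace (s + h - s) with h in H by ring.
  replace ((g (s + h) - g s) / h - l) with ((g (s + h) - g s - h * l) / h) by (field; auto).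
  unfold Rdiv. rewrite Rabs_mult, Rabs_Rinv by auto.
  assert (Hh1 : 0 < Rabs h) by (apply Rabs_pos_lt; auto).
  apply Rmult_lt_reg_r with (Rabs h); auto.
  rewrite Rmult_assoc, Rinv_l by lra. rewrite Rmult_1_r.
  eapply Rle_lt_trans. apply H.
  assert (T:=Rabs_pos K).
  assert (h * h = Rabs h * Rabs h) by (rewrite <- Rabs_mult; rewrite Rabs_right; nra).
  rewrite H0.
  assert (Rabs h < eps / (Rabs K + 1)) by lra.
  assert (K * (Rabs h * Rabs h) <= Rabs K * (Rabs h * Rabs h)).
  { apply Rmult_le_compat_r; [nra|apply RRle_abs]. }
  assert (Rabs K * Rabs h < eps).
  { apply Rle_lt_trans with ((Rabs K + 1) * Rabs h). nra.
    replace eps with ((Rabs K + 1) * (eps / (Rabs K + 1))) by (field; lra).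
    apply Rmult_lt_compat_l; lra. }
  nra.
Qed.

Definition N3d (p q : R * R * R) :=
  Rabs (cx p - cx q) + Rabs (cy p - cy q) + Rabs (cz p - cz q).

Lemma N3d_tri p q r : N3d p r <= N3d p q + N3d q r.
Proof.
  unfold N3d.
  assert (forall a b c : R, Rabs (a - c) <= Rabs (a - b) + Rabs (b - c)).
  { intros. replace (a - c) with ((a - b) + (b - c)) by ring. apply Rabs_triang. }
  specialize (H (cx p) (cx q) (cx r)) as H1.
  specialize (H (cy p) (cy q) (cy r)) as H2.
  specialize (H (cz p) (cz q) (cz r)) as H3. lra.
Qed.

Lemma N3d_pos p q : 0 <= N3d p q.
Proof. unfold N3d. assert (H1 := Rabs_pos (cx p - cx q)). assert (H2 := Rabs_pos (cy p - cy q)).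
  assert (H3 := Rabs_pos (cz p - cz q)). lra. Qed.

Lemma N3d_sym p q : N3d p q = N3d q p.
Proof. unfold N3d. rewrite (Rabs_minus_sym (cx p)), (Rabs_minus_sym (cy p)), (Rabs_minus_sym (cz p)). auto. Qed.

Fixpoint pic (G : R * R * R -> R * R * R) (x0 y0 z0 xi0 : R) (n : nat) : R -> R * R * R :=
  match n with
  | O => fun _ => (x0, y0, z0)
  | S n => fun s =>
      (x0 + RInt (fun r => cx (G (pic G x0 y0 z0 xi0 n r))) xi0 s,
       y0 + RInt (fun r => cy (G (pic G x0 y0 z0 xi0 n r))) xi0 s,
       z0 + RInt (fun r => cz (G (pic G x0 y0 z0 xi0 n r))) xi0 s)
  end.

Lemma int_lip (h : R -> R) M c xi0 : (forall z, continuity_pt h z) -> (forall r, Rabs (h r) <= M) ->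
  forall s s', Rabs ((c + RInt h xi0 s) - (c + RInt h xi0 s')) <= M * Rabs (s - s').
Proof.
  intros Hc Hb s s'.
  replace (c + RInt h xi0 s - (c + RInt h xi0 s')) with (RInt h s' s).
  - apply RInt_bound. apply exRInt_cont; auto. intros; auto.
  - rewrite <- (Chasles_R h xi0 s' s) by (apply exRInt_cont; auto). lra.
Qed.

Section Pic.
End Pic.


Lemma between_abs a b r : Rmin a b <= r <= Rmax a b -> Rabs (r - a) <= Rabs (b - a).
Proof. unfold Rmin, Rmax; destruct (Rle_dec a b); intros; unfold Rabs; repeat destruct Rcase_abs; lra. Qed.

Lemma between_abs2 a b r : Rmin a b <= r <= Rmax a b -> Rabs (r - b) <= Rabs (b - a).
Proof. unfold Rmin, Rmax; destruct (Rle_dec a b); intros; unfold Rabs; repeat destruct Rcase_abs; lra. Qed.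

Lemma between_in a b r d c : Rabs (a - c) <= d -> Rabs (b - c) <= d -> Rmin a b <= r <= Rmax a b -> Rabs (r - c) <= d.
Proof. unfold Rmin, Rmax; destruct (Rle_dec a b); intros H1 H2 H3;
  apply Rabs_le_inv in H1; apply Rabs_le_inv in H2; apply Rabs_le; lra. Qed.

Lemma triple_eq (p q : R * R * R) : cx p = cx q -> cy p = cy q -> cz p = cz q -> p = q.
Proof. destruct p as [[a b] c]; destruct q as [[a' b'] c']; unfold cx, cy, cz; simpl; intros; subst; auto. Qed.

Definition compk (k : R * R * R -> R) := k = cx \/ k = cy \/ k = cz.

Lemma N3d_comp k : compk k -> forall q q', Rabs (k q - k q') <= N3d q q'.
Proof.
  intros [ -> | [ -> | -> ] ] q q'; unfold N3d;
  assert (T1 := Rabs_pos (cx q - cx q')); assert (T2 := Rabs_pos (cy q - cy q'));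
  assert (T3 := Rabs_pos (cz q - cz q')); lra.
Qed.

Lemma picard_gen (G : R * R * R -> R * R * R) L M x0 y0 z0 xi0 :
  0 <= L -> 0 <= M ->
  (forall q q', N3d (G q) (G q') <= L * N3d q q') ->
  (forall q, Rabs (cx (G q)) <= M /\ Rabs (cy (G q)) <= M /\ Rabs (cz (G q)) <= M) ->
  exists f : R -> R * R * R,
    f xi0 = (x0, y0, z0) /\
    (forall s, Rabs (s - xi0) <= 1 / (6 * (L + M + 1)) ->
        N3d (f s) (x0, y0, z0) <= 3 * M * Rabs (s - xi0)) /\
    (forall s, xi0 - 1 / (6 * (L + M + 1)) < s < xi0 + 1 / (6 * (L + M + 1)) ->
       derivable_pt_lim (fun r => cx (f r)) s (cx (G (f s))) /\
       derivable_pt_lim (fun r => cy (f r)) s (cy (G (f s))) /\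
       derivable_pt_lim (fun r => cz (f r)) s (cz (G (f s)))).
Proof.
  intros HL0 HM0 HL HM.
  set (d := 1 / (6 * (L + M + 1))).
  assert (Hd : 0 < d) by (unfold d; apply Rdiv_lt_0_compat; lra).
  assert (Hd1 : 3 * M * d <= 1 /\ 6 * L * d <= 1 /\ M * d <= 1).
  { assert (E : d * (6 * (L + M + 1)) = 1) by (unfold d; field; lra).
    split; [|split]; nra. }
  set (P := pic G x0 y0 z0 xi0).
  assert (Hb : forall k, compk k -> forall q, Rabs (k (G q)) <= M).
  { intros k [ -> | [ -> | -> ] ] q; apply HM. }
  assert (Step : forall k, compk k -> forall n s,
     k (P (S n) s) = k (x0, y0, z0) + RInt (fun r => k (G (P n r))) xi0 s).
  { intros k [ -> | [ -> | -> ] ] n s; reflexivity. }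
  assert (Zero : forall s, P 0%nat s = (x0, y0, z0)) by reflexivity.
  assert (Plip : forall n, forall k, compk k -> forall s s', Rabs (k (P n s) - k (P n s')) <= M * Rabs (s - s')).
  { induction n as [|n IH]; intros k Hk s s'.
    - rewrite !Zero. unfold Rminus. rewrite Rplus_opp_r, Rabs_R0.
      assert (T := Rabs_pos (s + - s')). nra.
    - assert (HC : forall z, continuity_pt (fun r => k (G (P n r))) z).
      { apply (lip_cont _ (L * (3 * M))). intros r r'.
        eapply Rle_trans; [apply (N3d_comp k Hk)|]. eapply Rle_trans; [apply HL|].
        rewrite Rmult_assoc. apply Rmult_le_compat_l; auto. unfold N3d.
        assert (A1 := IH cx (or_introl eq_refl) r r').
        assert (A2 := IH cy (or_intror (or_introl eq_refl)) r r').
        assert (A3 := IH cz (or_intror (or_intror eq_refl)) r r'). lra. }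
      rewrite !(Step k Hk). apply int_lip; auto. }
  assert (Pcont : forall n k, compk k -> forall z, continuity_pt (fun r => k (G (P n r))) z).
  { intros n k Hk. apply (lip_cont _ (L * (3 * M))). intros r r'.
    eapply Rle_trans; [apply (N3d_comp k Hk)|]. eapply Rle_trans; [apply HL|].
    rewrite Rmult_assoc. apply Rmult_le_compat_l; auto. unfold N3d.
    assert (A1 := Plip n cx (or_introl eq_refl) r r').
    assert (A2 := Plip n cy (or_intror (or_introl eq_refl)) r r').
    assert (A3 := Plip n cz (or_intror (or_intror eq_refl)) r r'). lra. }
  assert (Pcontr : forall n s, Rabs (s - xi0) <= d -> N3d (P (S n) s) (P n s) <= (1/2)^n).
  { induction n as [|n IH]; intros s Hs.
    - assert (C : forall k, compk k -> Rabs (k (P 1%nat s) - k (P 0%nat s)) <= M * d).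
      { intros k Hk. rewrite (Step k Hk), Zero.
        replace (k (x0, y0, z0) + RInt (fun r => k (G (P 0%nat r))) xi0 s - k (x0, y0, z0))
          with (RInt (fun r => k (G (P 0%nat r))) xi0 s) by lra.
        eapply Rle_trans. apply RInt_bound. apply exRInt_cont; auto.
        intros r _. apply Hb; auto. apply Rmult_le_compat_l; auto. }
      unfold N3d. simpl pow.
      assert (A1 := C cx (or_introl eq_refl)).
      assert (A2 := C cy (or_intror (or_introl eq_refl))).
      assert (A3 := C cz (or_intror (or_intror eq_refl))). lra.
    - assert (C : forall k, compk k -> Rabs (k (P (S (S n)) s) - k (P (S n) s)) <= (L * (1/2)^n) * d).
      { intros k Hk. rewrite !(Step k Hk).
        replace (k (x0, y0, z0) + RInt (fun r => k (G (P (S n) r))) xi0 s -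
                 (k (x0, y0, z0) + RInt (fun r => k (G (P n r))) xi0 s))
          with (RInt (fun r => k (G (P (S n) r))) xi0 s - RInt (fun r => k (G (P n r))) xi0 s) by lra.
        rewrite <- minus_R by (apply exRInt_cont; auto).
        eapply Rle_trans. apply RInt_bound.
        - apply exRInt_cont. intros z. apply continuity_pt_minus; auto.
        - intros r Hr. eapply Rle_trans; [apply (N3d_comp k Hk)|]. eapply Rle_trans; [apply HL|].
          apply Rmult_le_compat_l; auto. apply IH.
          assert (T := between_abs xi0 s r Hr). lra.
        - apply Rmult_le_compat_l; auto. apply Rmult_le_pos; auto. apply pow_le; lra. }
      unfold N3d.
      assert (A1 := C cx (or_introl eq_refl)).
      assert (A2 := C cy (or_intror (or_introl eq_refl))).
      assert (A3 := C cz (or_intror (or_intror eq_refl))).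
      assert (T := pow_le (1/2) n ltac:(lra)).
      simpl pow. nra. }
  assert (Pcauchy : forall n m s, (n <= m)%nat -> Rabs (s - xi0) <= d ->
                    N3d (P m s) (P n s) <= 2 * (1/2)^n - 2 * (1/2)^m).
  { intros n m s Hnm Hs. induction Hnm as [|m Hnm IH].
    - unfold N3d. unfold Rminus. rewrite !Rplus_opp_r, Rabs_R0. lra.
    - eapply Rle_trans. apply (N3d_tri _ (P m s)). assert (T := Pcontr m s Hs).
      simpl pow. lra. }
  assert (Hlim : forall s, exists l : R * R * R, Rabs (s - xi0) <= d ->
     forall n k, compk k -> Rabs (k l - k (P n s)) <= 2 * (1/2)^n).
  { intros s. destruct (classic (Rabs (s - xi0) <= d)) as [Hs|Hs].
    2: { exists (0,0,0). intros; contradiction. }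
    assert (Ck : forall k, compk k -> exists l, forall n, Rabs (l - k (P n s)) <= 2 * (1/2)^n).
    { intros k Hk. apply cauchy_lim. intros n m Hnm.
      eapply Rle_trans. apply (N3d_comp k Hk). eapply Rle_trans. apply Pcauchy; auto.
      assert (T := pow_le (1/2) m ltac:(lra)). lra. }
    destruct (Ck cx (or_introl eq_refl)) as [lx Hx].
    destruct (Ck cy (or_intror (or_introl eq_refl))) as [ly Hy].
    destruct (Ck cz (or_intror (or_intror eq_refl))) as [lz Hz].
    exists (lx, ly, lz). intros _ n k [ -> | [ -> | -> ] ]; simpl; auto. }
  destruct (ex_fun _ Hlim) as [f Hf].
  assert (P_xi : forall n k, compk k -> k (P n xi0) = k (x0, y0, z0)).
  { intros [|n] k Hk. rewrite Zero; auto. rewrite (Step k Hk), point_R. lra. }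
  assert (f_xi : forall k, compk k -> k (f xi0) = k (x0, y0, z0)).
  { intros k Hk. assert (T : Rabs (k (f xi0) - k (x0, y0, z0)) <= 0).
    { apply (le_pow _ _ 2); [lra|]. intros n. rewrite <- (P_xi n k Hk).
      rewrite Rplus_0_l. apply Hf; auto. unfold Rminus; rewrite Rplus_opp_r, Rabs_R0; lra. }
    assert (T2 := Rabs_pos (k (f xi0) - k (x0, y0, z0))).
    assert (T3 : Rabs (k (f xi0) - k (x0, y0, z0)) = 0) by lra.
    apply Rabs_eq_0 in T3. lra. }
  assert (fLip : forall k, compk k -> forall r r', Rabs (r - xi0) <= d -> Rabs (r' - xi0) <= d ->
     Rabs (k (f r) - k (f r')) <= M * Rabs (r - r')).
  { intros k Hk r r' Hr Hr'. apply (le_pow _ _ 4); [lra|]. intros n.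
    assert (A1 := Hf r Hr n k Hk). assert (A2 := Hf r' Hr' n k Hk).
    assert (A3 := Plip n k Hk r r').
    replace (k (f r) - k (f r')) with ((k (f r) - k (P n r)) + (k (P n r) - k (P n r')) - (k (f r') - k (P n r'))) by ring.
    eapply Rle_trans. apply Rabs_sub_le. eapply Rle_trans. apply Rplus_le_compat_r. apply Rabs_triang. lra. }
  assert (N3f : forall r r', Rabs (r - xi0) <= d -> Rabs (r' - xi0) <= d ->
     N3d (f r) (f r') <= 3 * M * Rabs (r - r')).
  { intros r r' Hr Hr'. unfold N3d.
    assert (A1 := fLip cx (or_introl eq_refl) r r' Hr Hr').
    assert (A2 := fLip cy (or_intror (or_introl eq_refl)) r r' Hr Hr').
    assert (A3 := fLip cz (or_intror (or_intror eq_refl)) r r' Hr Hr'). lra. }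
  assert (N3Pf : forall n r, Rabs (r - xi0) <= d -> N3d (P n r) (f r) <= 6 * (1/2)^n).
  { intros n r Hr. unfold N3d.
    assert (A1 := Hf r Hr n cx (or_introl eq_refl)).
    assert (A2 := Hf r Hr n cy (or_intror (or_introl eq_refl))).
    assert (A3 := Hf r Hr n cz (or_intror (or_intror eq_refl))).
    rewrite (Rabs_minus_sym (cx (P n r))), (Rabs_minus_sym (cy (P n r))), (Rabs_minus_sym (cz (P n r))).
    lra. }
  assert (Quad : forall k, compk k -> forall s s', Rabs (s - xi0) <= d -> Rabs (s' - xi0) <= d ->
     Rabs (k (f s') - k (f s) - (s' - s) * k (G (f s))) <= (3 * L * M) * ((s' - s) * (s' - s))).
  { intros k Hk s s' Hs Hs'.
    assert (Hss : Rabs (s' - s) <= 2 * d).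
    { apply Rabs_le_inv in Hs. apply Rabs_le_inv in Hs'. apply Rabs_le. lra. }
    assert (Sq : (s' - s) * (s' - s) = Rabs (s' - s) * Rabs (s' - s)).
    { rewrite <- Rabs_mult. rewrite Rabs_right; auto. apply Rle_ge, Rle_0_sqr. }
    apply (le_pow _ _ (4 + 12 * L * d)). { assert (0 <= L * d) by nra. lra. }
    intros n.
    set (c := k (G (f s))).
    assert (E1 : k (P (S n) s') - k (P (S n) s) - (s' - s) * c =
                 RInt (fun r => k (G (P n r)) - c) s s').
    { rewrite minus_R. 2: { apply exRInt_cont; auto. } 2: { apply exRInt_cont. intros; apply continuity_pt_const. intros a b; auto. }
      rewrite const_R. rewrite !(Step k Hk).
      rewrite <- (Chasles_R (fun r => k (G (P n r))) xi0 s s') by (apply exRInt_cont; auto). lra. }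
    assert (E2 : Rabs (RInt (fun r => k (G (P n r)) - c) s s') <=
                 (L * (6 * (1/2)^n + 3 * M * Rabs (s' - s))) * Rabs (s' - s)).
    { apply RInt_bound.
      - apply exRInt_cont. intros z. apply continuity_pt_minus; auto. apply continuity_pt_const. intros a b; auto.
      - intros r Hr. unfold c. eapply Rle_trans; [apply (N3d_comp k Hk)|]. eapply Rle_trans; [apply HL|].
        apply Rmult_le_compat_l; auto.
        assert (Hr0 : Rabs (r - xi0) <= d) by exact (between_in s s' r d xi0 Hs Hs' Hr).
        eapply Rle_trans. apply (N3d_tri _ (f r)).
        assert (T1 := N3Pf n r Hr0). assert (T2 := N3f r s Hr0 Hs).
        assert (T3 := between_abs s s' r Hr).
        assert (3 * M * Rabs (r - s) <= 3 * M * Rabs (s' - s)) by (apply Rmult_le_compat_l; lra).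
        lra. }
    assert (A1 := Hf s' Hs' (S n) k Hk). assert (A2 := Hf s Hs (S n) k Hk).
    replace (k (f s') - k (f s) - (s' - s) * c) with
      ((k (f s') - k (P (S n) s')) - (k (f s) - k (P (S n) s)) + (k (P (S n) s') - k (P (S n) s) - (s' - s) * c)) by ring.
    rewrite E1.
    eapply Rle_trans. apply Rabs_triang. eapply Rle_trans. apply Rplus_le_compat_r. apply Rabs_sub_le.
    simpl pow in A1, A2.
    assert (T := pow_le (1/2) n ltac:(lra)).
    assert (T2 := Rabs_pos (s' - s)).
    assert (L * (6 * (1 / 2) ^ n) * Rabs (s' - s) <= 12 * L * d * (1/2)^n).
    { replace (L * (6 * (1 / 2) ^ n) * Rabs (s' - s)) with ((6 * L * (1/2)^n) * Rabs (s' - s)) by ring.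
      replace (12 * L * d * (1/2)^n) with ((6 * L * (1/2)^n) * (2 * d)) by ring.
      apply Rmult_le_compat_l; auto. assert (0 <= L * (1/2)^n) by nra. lra. }
    rewrite Sq. nra. }
  exists f. split; [|split].
  - assert (A1 := f_xi cx (or_introl eq_refl)).
    assert (A2 := f_xi cy (or_intror (or_introl eq_refl))).
    assert (A3 := f_xi cz (or_intror (or_intror eq_refl))).
    apply triple_eq; auto.
  - intros s Hs. replace (x0, y0, z0) with (f xi0).
    + apply N3f; auto. unfold Rminus; rewrite Rplus_opp_r, Rabs_R0; lra.
    + assert (A1 := f_xi cx (or_introl eq_refl)).
      assert (A2 := f_xi cy (or_intror (or_introl eq_refl))).
      assert (A3 := f_xi cz (or_intror (or_intror eq_refl))).
      apply triple_eq; auto.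
  - intros s Hs. fold d in Hs.
    assert (Hs' : Rabs (s - xi0) <= d) by (apply Rabs_le; lra).
    split; [|split]; eapply (deriv_quad _ s _ (3 * L * M) (xi0 - d) (xi0 + d)); auto;
      intros s' Hs'';
      [apply (Quad cx (or_introl eq_refl)) | apply (Quad cy (or_intror (or_introl eq_refl)))
      | apply (Quad cz (or_intror (or_intror eq_refl)))]; auto; apply Rabs_le; lra.
Qed.

Definition cl (a c : R) := Rmax (c - 1) (Rmin (c + 1) a).

Ltac cltac := unfold cl, Rmax, Rmin; repeat destruct Rle_dec; unfold Rabs; repeat destruct Rcase_abs; lra.

Lemma cl_bound a c : Rabs (cl a c) <= Rabs c + 1.
Proof. cltac. Qed.
Lemma cl_near a c : Rabs (cl a c - c) <= 1.
Proof. cltac. Qed.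
Lemma cl_lip a b c : Rabs (cl a c - cl b c) <= Rabs (a - b).
Proof. cltac. Qed.
Lemma cl_id a c : Rabs (a - c) <= 1 -> cl a c = a.
Proof. cltac. Qed.

Lemma picard (F : R -> R -> R -> R * R * R) : LL (fun _ x y z => F x y z) ->
  forall xi0 x0 y0 z0, exists dl, 0 < dl /\ exists u v w,
    is_solution (fun _ x y z => F x y z) (xi0 - dl) (xi0 + dl) u v w /\
    u xi0 = x0 /\ v xi0 = y0 /\ w xi0 = z0.
Proof.
  intros HF xi0 x0 y0 z0.
  set (Rb := Rabs x0 + Rabs y0 + Rabs z0 + 1).
  destruct (HF 0 Rb) as [L [HL0 HLL]].
  set (G := fun q : R * R * R => F (cl (cx q) x0) (cl (cy q) y0) (cl (cz q) z0)).
  assert (R0 : Rabs 0 <= 0) by (rewrite Rabs_R0; lra).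
  assert (Bx : forall a, Rabs (cl a x0) <= Rb) by (intros; assert (T:=cl_bound a x0); unfold Rb;
     assert (T1 := Rabs_pos y0); assert (T2 := Rabs_pos z0); lra).
  assert (By : forall a, Rabs (cl a y0) <= Rb) by (intros; assert (T:=cl_bound a y0); unfold Rb;
     assert (T1 := Rabs_pos x0); assert (T2 := Rabs_pos z0); lra).
  assert (Bz : forall a, Rabs (cl a z0) <= Rb) by (intros; assert (T:=cl_bound a z0); unfold Rb;
     assert (T1 := Rabs_pos y0); assert (T2 := Rabs_pos x0); lra).
  assert (GL : forall q q', N3d (G q) (G q') <= L * N3d q q').
  { intros q q'. unfold N3d at 1, G. eapply Rle_trans. apply (HLL 0); auto.
    apply Rmult_le_compat_l; auto. unfold N3d.
    assert (T1 := cl_lip (cx q) (cx q') x0). assert (T2 := cl_lip (cy q) (cy q') y0).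
    assert (T3 := cl_lip (cz q) (cz q') z0). lra. }
  set (p0 := F x0 y0 z0).
  set (M := Rabs (cx p0) + Rabs (cy p0) + Rabs (cz p0) + 3 * L).
  assert (HM0 : 0 <= M).
  { unfold M. assert (T1 := Rabs_pos (cx p0)). assert (T2 := Rabs_pos (cy p0)).
    assert (T3 := Rabs_pos (cz p0)). lra. }
  assert (GM : forall q, Rabs (cx (G q)) <= M /\ Rabs (cy (G q)) <= M /\ Rabs (cz (G q)) <= M).
  { intros q.
    assert (Ax : Rabs x0 <= Rb) by (unfold Rb; assert (T1 := Rabs_pos y0); assert (T2 := Rabs_pos z0); lra).
    assert (Ay : Rabs y0 <= Rb) by (unfold Rb; assert (T1 := Rabs_pos x0); assert (T2 := Rabs_pos z0); lra).
    assert (Az : Rabs z0 <= Rb) by (unfold Rb; assert (T1 := Rabs_pos y0); assert (T2 := Rabs_pos x0); lra).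
    assert (H := HLL 0 (cl (cx q) x0) (cl (cy q) y0) (cl (cz q) z0) x0 y0 z0 R0
                  (Bx _) (By _) (Bz _) Ax Ay Az).
    assert (T1 := cl_near (cx q) x0). assert (T2 := cl_near (cy q) y0).
    assert (T3 := cl_near (cz q) z0).
    assert (H' : L * (Rabs (cl (cx q) x0 - x0) + Rabs (cl (cy q) y0 - y0) + Rabs (cl (cz q) z0 - z0)) <= 3 * L) by nra.
    fold p0 in H. fold (G q) in H.
    assert (E1 := Rabs_triang_inv (cx (G q)) (cx p0)).
    assert (E2 := Rabs_triang_inv (cy (G q)) (cy p0)).
    assert (E3 := Rabs_triang_inv (cz (G q)) (cz p0)).
    assert (P1 := Rabs_pos (cx (G q) - cx p0)). assert (P2 := Rabs_pos (cy (G q) - cy p0)).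
    assert (P3 := Rabs_pos (cz (G q) - cz p0)).
    assert (Q1 := Rabs_pos (cx p0)). assert (Q2 := Rabs_pos (cy p0)).
    assert (Q3 := Rabs_pos (cz p0)).
    unfold M. split; [|split]; lra. }
  destruct (picard_gen G L M x0 y0 z0 xi0 HL0 HM0 GL GM) as [f [F0 [FN FD]]].
  set (d := 1 / (6 * (L + M + 1))) in *.
  assert (Hd : 0 < d) by (unfold d; apply Rdiv_lt_0_compat; lra).
  assert (Hd1 : 3 * M * d <= 1).
  { assert (E : d * (6 * (L + M + 1)) = 1) by (unfold d; field; lra). nra. }
  exists d. split; auto.
  exists (fun r => cx (f r)), (fun r => cy (f r)), (fun r => cz (f r)).
  split; [|rewrite F0; unfold cx, cy, cz; simpl; auto].
  intros s Hs.
  assert (Hs' : Rabs (s - xi0) <= d) by (apply Rabs_le; lra).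
  assert (N := FN s Hs'). unfold N3d in N. unfold cx at 2, cy at 2, cz at 2 in N. simpl in N.
  assert (T : 3 * M * Rabs (s - xi0) <= 1).
  { apply Rle_trans with (3 * M * d); auto. apply Rmult_le_compat_l; lra. }
  assert (T1 := Rabs_pos (cx (f s) - x0)). assert (T2 := Rabs_pos (cy (f s) - y0)).
  assert (T3 := Rabs_pos (cz (f s) - z0)).
  assert (EG : G (f s) = F (cx (f s)) (cy (f s)) (cz (f s))).
  { unfold G. rewrite !cl_id; auto; lra. }
  destruct (FD s Hs) as [D1 [D2 D3]]. rewrite EG in D1, D2, D3.
  split; [|split]; auto.
Qed.

Definition Fa (F : R -> R -> R -> R * R * R) : system := fun _ x y z => F x y z.
Definition Fsc (C : R -> R) (F : R -> R -> R -> R * R * R) : system :=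
  fun s x y z => (C s * cx (F x y z), C s * cy (F x y z), C s * cz (F x y z)).

Lemma Fsc_x C F s x y z : cx (Fsc C F s x y z) = C s * cx (F x y z). Proof. reflexivity. Qed.
Lemma Fsc_y C F s x y z : cy (Fsc C F s x y z) = C s * cy (F x y z). Proof. reflexivity. Qed.
Lemma Fsc_z C F s x y z : cz (Fsc C F s x y z) = C s * cz (F x y z). Proof. reflexivity. Qed.

Lemma sol_restrict X lo hi lo' hi' u v w : is_solution X lo hi u v w -> lo <= lo' -> hi' <= hi ->
  is_solution X lo' hi' u v w.
Proof. intros H H1 H2 s Hs. apply H. lra. Qed.

Lemma LL_Fsc F C : LL (Fa F) -> continuity C -> LL (Fsc C F).
Proof.
  intros HF HC A Rb. destruct (HF A Rb) as [L [HL0 HL]].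
  destruct (bounded_on C (-A) A) as [B HB]. { intros; apply HC. }
  exists (Rabs B * L). split. { assert (T := Rabs_pos B). nra. }
  intros s x1 y1 z1 x2 y2 z2 Hs Hx1 Hy1 Hz1 Hx2 Hy2 Hz2.
  assert (HCs : Rabs (C s) <= Rabs B).
  { eapply Rle_trans. apply HB. apply Rabs_le_inv in Hs; lra. apply RRle_abs. }
  rewrite !Fsc_x, !Fsc_y, !Fsc_z.
  rewrite <- !Rmult_minus_distr_l, !Rabs_mult.
  assert (H := HL s x1 y1 z1 x2 y2 z2 Hs Hx1 Hy1 Hz1 Hx2 Hy2 Hz2). unfold Fa in H.
  assert (T1 := Rabs_pos (cx (F x1 y1 z1) - cx (F x2 y2 z2))).
  assert (T2 := Rabs_pos (cy (F x1 y1 z1) - cy (F x2 y2 z2))).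
  assert (T3 := Rabs_pos (cz (F x1 y1 z1) - cz (F x2 y2 z2))).
  assert (T4 := Rabs_pos (C s)).
  assert (Rabs (C s) * (Rabs (cx (F x1 y1 z1) - cx (F x2 y2 z2)) + Rabs (cy (F x1 y1 z1) - cy (F x2 y2 z2)) + Rabs (cz (F x1 y1 z1) - cz (F x2 y2 z2)))
     <= Rabs B * (L * (Rabs (x1 - x2) + Rabs (y1 - y2) + Rabs (z1 - z2)))).
  { apply Rmult_le_compat; auto; lra. }
  rewrite <- Rmult_assoc in H0. eapply Rle_trans; [|exact H0]. right; ring.
Qed.

Definition glue (a b : R) (W V : R -> R) : R -> R :=
  fun x => if Rlt_dec a x then if Rlt_dec x b then W x else V x else V x.

Lemma glue_W a b W V x : a < x < b -> glue a b W V x = W x.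
Proof. intros H. unfold glue. destruct (Rlt_dec a x); [|lra]. destruct (Rlt_dec x b); [auto|lra]. Qed.

Lemma glue_V a b a' b' W V x : (forall y, a < y < b -> a' < y < b' -> W y = V y) -> a' < x < b' ->
  glue a b W V x = V x.
Proof.
  intros H Hx. unfold glue. destruct (Rlt_dec a x); auto. destruct (Rlt_dec x b); auto.
Qed.

Lemma glue_sol F a b a' b' W1 W2 W3 V1 V2 V3 xi : LL (Fa F) ->
  is_solution (Fa F) a b W1 W2 W3 -> is_solution (Fa F) a' b' V1 V2 V3 ->
  a < xi < b -> a' < xi < b' -> W1 xi = V1 xi -> W2 xi = V2 xi -> W3 xi = V3 xi ->
  is_solution (Fa F) (Rmin a a') (Rmax b b') (glue a b W1 V1) (glue a b W2 V2) (glue a b W3 V3)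
  /\ (forall y, a < y < b -> glue a b W1 V1 y = W1 y /\ glue a b W2 V2 y = W2 y /\ glue a b W3 V3 y = W3 y)
  /\ (forall y, a' < y < b' -> glue a b W1 V1 y = V1 y /\ glue a b W2 V2 y = V2 y /\ glue a b W3 V3 y = V3 y).
Proof.
  intros HF SW SV Hxi Hxi' E1 E2 E3.
  assert (Agree : forall y, a < y < b -> a' < y < b' -> W1 y = V1 y /\ W2 y = V2 y /\ W3 y = V3 y).
  { intros y Hy Hy'.
    apply (uniq (Fa F) (Rmax a a') (Rmin b b') W1 W2 W3 V1 V2 V3 xi y HF).
    - apply (sol_restrict _ a b); auto. apply Rmax_l. apply Rmin_l.
    - apply (sol_restrict _ a' b'); auto. apply Rmax_r. apply Rmin_r.
    - unfold Rmax, Rmin; destruct Rle_dec; destruct Rle_dec; lra.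
    - unfold Rmax, Rmin; destruct Rle_dec; destruct Rle_dec; lra.
    - auto. - auto. - auto. }
  assert (GW : forall y, a < y < b -> glue a b W1 V1 y = W1 y /\ glue a b W2 V2 y = W2 y /\ glue a b W3 V3 y = W3 y).
  { intros y Hy. rewrite !glue_W; auto. }
  assert (GV : forall y, a' < y < b' -> glue a b W1 V1 y = V1 y /\ glue a b W2 V2 y = V2 y /\ glue a b W3 V3 y = V3 y).
  { intros y Hy. split; [|split]; apply (glue_V a b a' b'); auto; intros; apply Agree; auto. }
  split; [|split; auto].
  intros x Hx.
  assert (Hc : (a < x < b) \/ (a' < x < b')).
  { revert Hx. unfold Rmax, Rmin; destruct Rle_dec; destruct Rle_dec; lra. }
  destruct Hc as [Hc|Hc].
  - destruct (GW x Hc) as [G1 [G2 G3]]. unfold Fa. rewrite G1, G2, G3.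
    destruct (SW x Hc) as [D1 [D2 D3]]. unfold Fa in D1, D2, D3.
    split; [|split]; eapply deriv_ext_loc; eauto; intros y Hy; apply GW; auto.
  - destruct (GV x Hc) as [G1 [G2 G3]]. unfold Fa. rewrite G1, G2, G3.
    destruct (SV x Hc) as [D1 [D2 D3]]. unfold Fa in D1, D2, D3.
    split; [|split]; eapply deriv_ext_loc; eauto; intros y Hy; apply GV; auto.
Qed.

Definition Qp F (sig u v w : R -> R) (s t0 : R) :=
  exists a b W1 W2 W3, is_solution (Fa F) a b W1 W2 W3 /\
    forall r, s <= r <= t0 -> a < sig r < b /\ u r = W1 (sig r) /\ v r = W2 (sig r) /\ w r = W3 (sig r).

Lemma local_step F c sig lo hi u v w m : LL (Fa F) -> continuity c ->
  (forall r, derivable_pt_lim sig r (c r)) -> is_solution (Fsc c F) lo hi u v w -> lo < m < hi ->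
  exists eta, 0 < eta /\ exists a b V1 V2 V3, is_solution (Fa F) a b V1 V2 V3 /\
    forall r, m - eta < r < m + eta -> lo < r < hi /\ a < sig r < b /\
      u r = V1 (sig r) /\ v r = V2 (sig r) /\ w r = V3 (sig r).
Proof.
  intros HF Hc Hs Hsol Hm.
  destruct (picard F HF (sig m) (u m) (v m) (w m)) as [dl [Hdl [V1 [V2 [V3 [SV [E1 [E2 E3]]]]]]]].
  assert (Cs := dcont _ _ _ (Hs m)).
  destruct (Cs dl Hdl) as [e0 [He0 He0']].
  set (eta := Rmin e0 (Rmin (m - lo) (hi - m))).
  assert (Heta : 0 < eta) by (unfold eta; repeat apply Rmin_pos; lra).
  assert (Hm1 := Rmin_l e0 (Rmin (m - lo) (hi - m))).
  assert (Hm2 := Rmin_r e0 (Rmin (m - lo) (hi - m))).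
  assert (Hm3 := Rmin_l (m - lo) (hi - m)).
  assert (Hm4 := Rmin_r (m - lo) (hi - m)). fold eta in Hm1, Hm2.
  assert (Hin : forall r, m - eta < r < m + eta -> sig m - dl < sig r < sig m + dl).
  { intros r Hr. destruct (Req_dec r m) as [->|Hne]; [lra|].
    assert (T := He0' r). simpl in T. unfold R_dist, D_x, no_cond in T.
    assert (T' : Rabs (sig r - sig m) < dl).
    { apply T. split; [split; auto|]. apply Rabs_def1; lra. }
    apply Rabs_def2 in T'. lra. }
  exists eta. split; auto.
  exists (sig m - dl), (sig m + dl), V1, V2, V3. split; auto.
  assert (SC : is_solution (Fsc c F) (m - eta) (m + eta)
                 (fun r => V1 (sig r)) (fun r => V2 (sig r)) (fun r => V3 (sig r))).
  { intros r Hr. destruct (SV (sig r) (Hin r Hr)) as [D1 [D2 D3]]. unfold Fa in D1, D2, D3.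
    rewrite Fsc_x, Fsc_y, Fsc_z.
    split; [|split]; rewrite Rmult_comm;
      apply (derivable_pt_lim_comp sig); auto. }
  intros r Hr. split; [lra|]. split; [apply Hin; auto|].
  apply (uniq (Fsc c F) (m - eta) (m + eta) u v w (fun r => V1 (sig r)) (fun r => V2 (sig r)) (fun r => V3 (sig r)) m r).
  - apply LL_Fsc; auto.
  - apply (sol_restrict _ lo hi); auto; lra.
  - auto.
  - lra.
  - auto.
  - simpl; auto. - simpl; auto. - simpl; auto.
Qed.

Lemma TC_core F c sig lo hi u v w t0 : LL (Fa F) -> continuity c ->
  (forall r, derivable_pt_lim sig r (c r)) -> is_solution (Fsc c F) lo hi u v w -> lo < t0 < hi ->
  forall s, lo < s <= t0 -> Qp F sig u v w s t0.
Proof.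
  intros HF Hc Hs Hsol Ht0 s1 Hs1.
  apply NNPP. intros NQ.
  set (E := fun x => s1 <= x <= t0 /\ Qp F sig u v w x t0).
  assert (Qmono : forall x y, Qp F sig u v w x t0 -> x <= y -> Qp F sig u v w y t0).
  { intros x y [a [b [W1 [W2 [W3 [SW HW]]]]]] Hxy. exists a, b, W1, W2, W3. split; auto.
    intros r Hr. apply HW. lra. }
  assert (Qt0 : Qp F sig u v w t0 t0).
  { destruct (local_step F c sig lo hi u v w t0 HF Hc Hs Hsol Ht0) as [eta [Heta [a [b [V1 [V2 [V3 [SV HV]]]]]]]].
    exists a, b, V1, V2, V3. split; auto. intros r Hr. assert (r = t0) by lra. subst.
    destruct (HV t0) as [_ H]; [lra|]. auto. }
  set (E' := fun x => E (- x)).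
  assert (Bd : bound E'). { exists (- s1). intros x [Hx _]. lra. }
  assert (Ne : exists x, E' x). { exists (- t0). unfold E', E. rewrite Ropp_involutive. split; [lra|auto]. }
  destruct (completeness E' Bd Ne) as [M' [HM1 HM2]].
  set (m := - M').
  assert (Hlow : forall x, E x -> m <= x).
  { intros x Ex. unfold m. assert (T := HM1 (- x)). unfold E' in T. rewrite Ropp_involutive in T.
    specialize (T Ex). lra. }
  assert (Hglb : forall y, (forall x, E x -> y <= x) -> y <= m).
  { intros y Hy. unfold m. assert (T := HM2 (- y)).
    assert (- y >= M'). { apply Rle_ge, T. intros x Ex. unfold E' in Ex. specialize (Hy _ Ex). lra. }
    lra. }
  assert (Hm1 : s1 <= m).
  { apply Hglb. intros x [Hx _]. lra. }
  assert (Hm2 : m <= t0).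
  { apply Hlow. split; [lra|auto]. }
  destruct (local_step F c sig lo hi u v w m HF Hc Hs Hsol ltac:(lra)) as [eta [Heta [a' [b' [V1 [V2 [V3 [SV HV]]]]]]]].
  assert (Hx : exists x, E x /\ x < m + eta).
  { apply NNPP. intros N. assert (m + eta <= m); [|lra].
    apply Hglb. intros x Ex. apply Rnot_lt_le. intros Hlt. apply N. exists x. auto. }
  destruct Hx as [x [[Hx1 Qx] Hx2]].
  assert (Hmx : m <= x) by (apply Hlow; split; auto).
  destruct Qx as [a [b [W1 [W2 [W3 [SW HW]]]]]].
  destruct (HW x) as [Hsx [Ex1 [Ex2 Ex3]]]; [lra|].
  destruct (HV x) as [_ [Hsx' [Fx1 [Fx2 Fx3]]]]; [lra|].
  destruct (glue_sol F a b a' b' W1 W2 W3 V1 V2 V3 (sig x) HF SW SV Hsx Hsx')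
    as [SG [GW GV]]; try congruence.
  set (s2 := Rmax s1 (m - eta / 2)).
  assert (Q2 : Qp F sig u v w s2 t0).
  { exists (Rmin a a'), (Rmax b b'), (glue a b W1 V1), (glue a b W2 V2), (glue a b W3 V3).
    split; auto. intros r Hr.
    assert (Hs2 := Rmax_r s1 (m - eta / 2)). fold s2 in Hs2.
    destruct (Rle_dec x r) as [Hxr|Hxr].
    - destruct (HW r) as [H1 [H2 [H3 H4]]]; [lra|].
      destruct (GW (sig r) H1) as [G1 [G2 G3]]. rewrite G1, G2, G3.
      split; [|auto].
      assert (T1 := Rmin_l a a'). assert (T2 := Rmax_l b b'). lra.
    - destruct (HV r) as [_ [H1 [H2 [H3 H4]]]]; [lra|].
      destruct (GV (sig r) H1) as [G1 [G2 G3]]. rewrite G1, G2, G3.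
      split; [|auto].
      assert (T1 := Rmin_r a a'). assert (T2 := Rmax_r b b'). lra. }
  destruct (Rle_dec (m - eta / 2) s1) as [Hc1|Hc1].
  - assert (s2 = s1) by (unfold s2, Rmax; destruct Rle_dec; lra).
    rewrite H in Q2. contradiction.
  - assert (s2 = m - eta / 2) by (unfold s2, Rmax; destruct Rle_dec; lra).
    assert (E s2) by (split; [lra|auto]).
    assert (T := Hlow _ H0). lra.
Qed.

Lemma antideriv k lo hi t0 s : (forall r, lo < r < hi -> continuity_pt k r) ->
  lo < t0 < hi -> lo < s < hi -> derivable_pt_lim (fun r => RInt k t0 r) s (k s).
Proof.
  intros Hk Ht Hs. apply is_derive_Reals.
  apply (is_derive_RInt k (fun r => RInt k t0 r) t0 s).
  - assert (Hp : 0 < Rmin (s - lo) (hi - s)) by (apply Rmin_pos; lra).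
    exists (mkposreal _ Hp). intros y Hy. change (Rabs (y - s) < Rmin (s - lo) (hi - s)) in Hy.
    assert (T1 := Rmin_l (s - lo) (hi - s)). assert (T2 := Rmin_r (s - lo) (hi - s)).
    apply Rabs_def2 in Hy.
    apply (RInt_correct (V := R_CompleteNormedModule)). apply (ex_RInt_continuous (V := R_CompleteNormedModule)).
    intros z Hz. apply cont_C. apply Hk.
    revert Hz. unfold Rmin, Rmax; destruct Rle_dec; lra.
  - apply cont_C. apply Hk; auto.
Qed.

Lemma dopp f s l : derivable_pt_lim f (- s) l -> derivable_pt_lim (fun r => f (- r)) s (- l).
Proof.
  intros H. replace (- l) with (l * -1) by ring.
  apply (derivable_pt_lim_comp (fun r => - r) f s (-1) l).
  - replace (-1) with (-(1)) by ring. apply derivable_pt_lim_opp. apply derivable_pt_lim_id.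
  - auto.
Qed.

Lemma odd_int al t : continuity al -> odd_fun al -> RInt al t (- t) = 0.
Proof.
  intros Hc Ho.
  set (K := fun r => RInt al t r).
  assert (HK : forall s, derivable_pt_lim K s (al s)).
  { intros s. apply (antideriv al (Rmin t s - 1) (Rmax t s + 1)).
    - intros; apply Hc.
    - unfold Rmin, Rmax; destruct Rle_dec; lra.
    - unfold Rmin, Rmax; destruct Rle_dec; lra. }
  assert (E : (fun r => K r - K (- r)) t = (fun r => K r - K (- r)) 0).
  { apply (const_deriv0 (fun r => K r - K (- r)) (- Rabs t - 1) (Rabs t + 1) t 0).
    - intros r _. replace 0 with (al r - - al (- r)).
      + apply derivable_pt_lim_minus. apply HK. apply dopp. apply HK.
      + rewrite (Ho r). ring.
    - assert (T1 := Rle_abs t); assert (T2 := Rle_abs (-t)); rewrite Rabs_Ropp in T2; lra.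
    - assert (T := Rabs_pos t). lra. }
  cbv beta in E. rewrite Ropp_0 in E.
  unfold K in *. rewrite point_R in E. lra.
Qed.

Lemma sol_Fsc1 F lo hi u v w : is_solution (Fsc (fun _ => 1) F) lo hi u v w -> is_solution (Fa F) lo hi u v w.
Proof.
  intros H s Hs. destruct (H s Hs) as [D1 [D2 D3]].
  rewrite Fsc_x, Rmult_1_l in D1. rewrite Fsc_y, Rmult_1_l in D2. rewrite Fsc_z, Rmult_1_l in D3.
  unfold Fa. auto.
Qed.

Lemma TC_pos F al : LL (Fa F) -> continuity al -> odd_fun al ->
  forall t p q1 q2, 0 <= t -> MRF (Fsc (fun _ => 1) F) t p q1 ->
  MRF (Fsc (fun s => 1 + al s) F) t p q2 -> q1 = q2.
Proof.
  intros HF Hc Ho t p q1 q2 Ht [lo1 [hi1 [u1 [v1 [w1 [L1 [H1 [S1 [A1 [A2 [A3 [B1 [B2 B3]]]]]]]]]]]]]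
                                [lo2 [hi2 [u2 [v2 [w2 [L2 [H2 [S2 [C1 [C2 [C3 [D1 [D2 D3]]]]]]]]]]]]].
  rewrite Rabs_right in L1, H1, L2, H2 by lra.
  set (sig := fun r => r + RInt al t r).
  assert (Hsig : forall r, derivable_pt_lim sig r (1 + al r)).
  { intros r. apply derivable_pt_lim_plus. apply derivable_pt_lim_id.
    apply (antideriv al (Rmin t r - 1) (Rmax t r + 1)).
    - intros; apply Hc.
    - unfold Rmin, Rmax; destruct Rle_dec; lra.
    - unfold Rmin, Rmax; destruct Rle_dec; lra. }
  assert (Hc1 : continuity (fun s => 1 + al s)).
  { intros x. apply continuity_pt_plus. apply continuity_pt_const. intros a b; auto. apply Hc. }
  destruct (TC_core F (fun s => 1 + al s) sig lo2 hi2 u2 v2 w2 t HF Hc1 Hsig S2 ltac:(lra) (- t) ltac:(lra))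
    as [a [b [W1 [W2 [W3 [SW HW]]]]]].
  assert (sig_t : sig t = t) by (unfold sig; rewrite point_R; ring).
  assert (sig_mt : sig (- t) = - t) by (unfold sig; rewrite odd_int; auto; ring).
  destruct (HW t) as [Ht1 [Et1 [Et2 Et3]]]; [lra|].
  destruct (HW (- t)) as [Ht2 [Em1 [Em2 Em3]]]; [lra|].
  rewrite sig_t in Ht1, Et1, Et2, Et3. rewrite sig_mt in Ht2, Em1, Em2, Em3.
  assert (S1' := sol_Fsc1 F _ _ _ _ _ S1).
  destruct (uniq (Fa F) (Rmax a lo1) (Rmin b hi1) W1 W2 W3 u1 v1 w1 t (- t) HF) as [G1 [G2 G3]].
  - apply (sol_restrict _ a b); auto. apply Rmax_l. apply Rmin_l.
  - apply (sol_restrict _ lo1 hi1); auto. apply Rmax_r. apply Rmin_r.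
  - unfold Rmax, Rmin; destruct Rle_dec; destruct Rle_dec; lra.
  - unfold Rmax, Rmin; destruct Rle_dec; destruct Rle_dec; lra.
  - congruence. - congruence. - congruence.
  - apply triple_eq; congruence.
Qed.

Definition negF (F : R -> R -> R -> R * R * R) : R -> R -> R -> R * R * R :=
  fun x y z => (- cx (F x y z), - cy (F x y z), - cz (F x y z)).

Lemma negF_x F x y z : cx (negF F x y z) = - cx (F x y z). Proof. reflexivity. Qed.
Lemma negF_y F x y z : cy (negF F x y z) = - cy (F x y z). Proof. reflexivity. Qed.
Lemma negF_z F x y z : cz (negF F x y z) = - cz (F x y z). Proof. reflexivity. Qed.

Lemma LL_neg F : LL (Fa F) -> LL (Fa (negF F)).
Proof.
  intros HF A Rb. destruct (HF A Rb) as [L [HL0 HL]]. exists L. split; auto.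
  intros s x1 y1 z1 x2 y2 z2 Hs Hx1 Hy1 Hz1 Hx2 Hy2 Hz2.
  unfold Fa. rewrite !negF_x, !negF_y, !negF_z.
  assert (H := HL s x1 y1 z1 x2 y2 z2 Hs Hx1 Hy1 Hz1 Hx2 Hy2 Hz2). unfold Fa in H.
  assert (E : forall a b : R, - a - - b = - (a - b)) by (intros; ring).
  rewrite !E, !Rabs_Ropp. auto.
Qed.

Lemma MRF_ext X Y t p q : (forall s x y z, X s x y z = Y s x y z) -> MRF X t p q -> MRF Y t p q.
Proof.
  intros E [lo [hi [u [v [w [H1 [H2 [S R]]]]]]]]. exists lo, hi, u, v, w. split; auto. split; auto.
  split; auto. intros s Hs. rewrite <- E. apply S; auto.
Qed.

Lemma MRF_rev C F t p q : MRF (Fsc C F) t p q -> MRF (Fsc (fun r => C (- r)) (negF F)) (- t) p q.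
Proof.
  intros [lo [hi [u [v [w [H1 [H2 [S [A1 [A2 [A3 [B1 [B2 B3]]]]]]]]]]]]].
  exists (- hi), (- lo), (fun r => u (- r)), (fun r => v (- r)), (fun r => w (- r)).
  assert (Ea := Rabs_Ropp t).
  split; [lra|]. split; [lra|]. split.
  - intros s Hs. destruct (S (- s) ltac:(lra)) as [D1 [D2 D3]].
    rewrite Fsc_x in D1. rewrite Fsc_y in D2. rewrite Fsc_z in D3.
    rewrite Fsc_x, Fsc_y, Fsc_z, negF_x, negF_y, negF_z.
    assert (E : forall a b : R, a * - b = - (a * b)) by (intros; ring).
    rewrite !E. split; [|split]; apply dopp; auto.
  - rewrite Ropp_involutive. repeat split; auto.
Qed.

Lemma TC F al : LL (Fa F) -> continuity al -> odd_fun al ->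
  forall t p q1 q2, MRF (Fsc (fun _ => 1) F) t p q1 ->
  MRF (Fsc (fun s => 1 + al s) F) t p q2 -> q1 = q2.
Proof.
  intros HF Hc Ho t p q1 q2 M1 M2.
  destruct (Rle_dec 0 t) as [Ht|Ht].
  - eapply TC_pos; eauto.
  - apply (TC_pos (negF F) (fun r => - al r) (LL_neg F HF)) with (t := - t) (p := p); auto.
    + intros x. apply continuity_pt_opp. apply Hc.
    + intros x. simpl. rewrite Ho. auto.
    + lra.
    + apply MRF_rev in M1. exact M1.
    + apply MRF_rev in M2. revert M2. apply MRF_ext. intros s x y z.
      unfold Fsc. rewrite (Ho s). apply triple_eq; unfold cx, cy, cz; simpl; ring.
Qed.

Definition D2 (a e : R) : R -> R -> R -> R * R * R :=
  fun x y z => (a * x + x * z, a * y + y * z, e * z - (x ^ 2 + y ^ 2 + z ^ 2)).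

Lemma LL_D2 a e : LL (Fa (D2 a e)).
Proof. apply LL_of_nice; unfold Fa, D2, cx, cy, cz; simpl; solve_nice. Qed.

Definition FL a b c d e : R -> R -> R -> R * R * R := fun x y z => langford a b c d e 0 x y z.

Lemma LL_FL a b c d e : LL (Fa (FL a b c d e)).
Proof. apply LL_of_nice; unfold Fa, FL, langford, cx, cy, cz; simpl; solve_nice. Qed.

Lemma part_i a b c d e al1 : continuity al1 -> odd_fun al1 ->
  same_MRF (langford a b c d e) (sys_i a b c d e al1).
Proof.
  intros Hc Ho t p q1 q2 M1 M2.
  apply (TC (FL a b c d e) al1 (LL_FL a b c d e) Hc Ho t p).
  - revert M1. apply MRF_ext. intros s x y z. unfold Fsc, FL, langford.
    apply triple_eq; unfold cx, cy, cz; simpl; ring.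
  - revert M2. apply MRF_ext. intros s x y z. unfold Fsc, FL, langford, sys_i.
    apply triple_eq; unfold cx, cy, cz; simpl; ring.
Qed.

Lemma sc1 x : sin x ^ 2 + cos x ^ 2 = 1.
Proof. assert (H := sin2_cos2 x). unfold Rsqr in H. simpl. lra. Qed.

Lemma toD f s l : derivable_pt_lim f s l -> is_derive f s l.
Proof. intro H; apply is_derive_Reals; auto. Qed.
Lemma ofD f s l : is_derive f s l -> derivable_pt_lim f s l.
Proof. intro H; apply is_derive_Reals; auto. Qed.

Ltac dsubst :=
  repeat match goal with
  | H : is_derive ?u ?s ?l |- context [Derive (fun x => ?u x) ?s] =>
      replace (Derive (fun x => u x) s) with l by (symmetry; apply is_derive_unique; exact H)
  end.

Ltac exd :=
  repeat match goal with
  | |- _ /\ _ => split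
  | |- True => exact I
  | H : is_derive ?u ?s _ |- ex_derive (fun x => ?u x) ?s => eexists; exact H
  | H : is_derive ?u ?s _ |- ex_derive ?u ?s => eexists; exact H
  end.

Ltac ad := auto_derive; [exd | dsubst].

Lemma rot_sol X lo hi x y z be k C a e :
  is_solution X lo hi x y z ->
  (forall s, lo < s < hi -> derivable_pt_lim be s (k s)) ->
  (forall s, lo < s < hi ->
    cx (X s (x s) (y s) (z s)) = C s * (a + z s) * x s + k s * y s /\
    cy (X s (x s) (y s) (z s)) = C s * (a + z s) * y s - k s * x s /\
    cz (X s (x s) (y s) (z s)) = C s * (e * z s - (x s ^ 2 + y s ^ 2 + z s ^ 2))) ->
  is_solution (Fsc C (D2 a e)) lo hi (fun r => x r * cos (be r) - y r * sin (be r))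
     (fun r => x r * sin (be r) + y r * cos (be r)) z.
Proof.
  intros S Hb Hst s Hs.
  destruct (S s Hs) as [D1 [D2' D3]]. destruct (Hst s Hs) as [E1 [E2 E3]].
  rewrite E1 in D1. rewrite E2 in D2'. rewrite E3 in D3.
  apply toD in D1. apply toD in D2'. apply toD in D3. assert (B := toD _ _ _ (Hb s Hs)).
  rewrite Fsc_x, Fsc_y, Fsc_z. unfold D2, cx, cy, cz; simpl.
  assert (Q := sc1 (be s)).
  split; [|split]; apply ofD.
  - ad. ring.
  - ad. ring.
  - eapply is_derive_ext; [intros; reflexivity|].
    replace (C s * (e * z s - ((x s * cos (be s) - y s * sin (be s)) * ((x s * cos (be s) - y s * sin (be s)) * 1) +
        (x s * sin (be s) + y s * cos (be s)) * ((x s * sin (be s) + y s * cos (be s)) * 1) + z s * (z s * 1))))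
      with (C s * (e * z s - (x s ^ 2 + y s ^ 2 + z s ^ 2))); auto.
    replace ((x s * cos (be s) - y s * sin (be s)) * ((x s * cos (be s) - y s * sin (be s)) * 1) +
        (x s * sin (be s) + y s * cos (be s)) * ((x s * sin (be s) + y s * cos (be s)) * 1))
      with ((x s ^ 2 + y s ^ 2) * (sin (be s) ^ 2 + cos (be s) ^ 2)) by ring.
    rewrite Q. ring.
Qed.

Definition rot (th : R) (q : R * R * R) : R * R * R :=
  (cx q * cos th - cy q * sin th, cx q * sin th + cy q * cos th, cz q).

Lemma rot_x th q : cx (rot th q) = cx q * cos th - cy q * sin th. Proof. reflexivity. Qed.
Lemma rot_y th q : cy (rot th q) = cx q * sin th + cy q * cos th. Proof. reflexivity. Qed.
Lemma rot_z th q : cz (rot th q) = cz q. Proof. reflexivity. Qed.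

Lemma rot_inj th q1 q2 : rot th q1 = rot th q2 -> q1 = q2.
Proof.
  intros H. assert (Q := sc1 th).
  assert (H1 : cx (rot th q1) = cx (rot th q2)) by (rewrite H; auto).
  assert (H2 : cy (rot th q1) = cy (rot th q2)) by (rewrite H; auto).
  assert (H3 : cz (rot th q1) = cz (rot th q2)) by (rewrite H; auto).
  rewrite !rot_x in H1. rewrite !rot_y in H2. rewrite !rot_z in H3.
  set (A := cx q1 - cx q2) in *. set (B := cy q1 - cy q2).
  assert (E1 : A * cos th - B * sin th = 0) by (unfold A, B; lra).
  assert (E2 : A * sin th + B * cos th = 0) by (unfold A, B; lra).
  assert (A = (A * cos th - B * sin th) * cos th + (A * sin th + B * cos th) * sin th).
  { transitivity (A * (sin th ^ 2 + cos th ^ 2)); [rewrite Q; ring| ring]. }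
  assert (B = - (A * cos th - B * sin th) * sin th + (A * sin th + B * cos th) * cos th).
  { transitivity (B * (sin th ^ 2 + cos th ^ 2)); [rewrite Q; ring| ring]. }
  rewrite E1, E2 in *. apply triple_eq; unfold A, B in *; lra.
Qed.

Lemma rot_MRF X lo hi x y z t p q be k C a e :
  lo < - Rabs t -> Rabs t < hi -> is_solution X lo hi x y z ->
  x t = cx p -> y t = cy p -> z t = cz p -> x (-t) = cx q -> y (-t) = cy q -> z (-t) = cz q ->
  (forall s, lo < s < hi -> derivable_pt_lim be s (k s)) -> be t = 0 ->
  (forall s, lo < s < hi ->
    cx (X s (x s) (y s) (z s)) = C s * (a + z s) * x s + k s * y s /\
    cy (X s (x s) (y s) (z s)) = C s * (a + z s) * y s - k s * x s /\
    cz (X s (x s) (y s) (z s)) = C s * (e * z s - (x s ^ 2 + y s ^ 2 + z s ^ 2))) ->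
  MRF (Fsc C (D2 a e)) t p (rot (be (- t)) q).
Proof.
  intros H1 H2 S E1 E2 E3 F1 F2 F3 Hb Hbt Hst.
  exists lo, hi, (fun r => x r * cos (be r) - y r * sin (be r)),
     (fun r => x r * sin (be r) + y r * cos (be r)), z.
  split; auto. split; auto. split. { eapply rot_sol; eauto. }
  rewrite Hbt, cos_0, sin_0. rewrite rot_x, rot_y, rot_z.
  rewrite E1, E2, F1, F2. repeat split; try ring; auto.
Qed.

Lemma antideriv_g k t0 s : continuity k -> derivable_pt_lim (fun r => RInt k t0 r) s (k s).
Proof.
  intros Hc. apply (antideriv k (Rmin t0 s - 1) (Rmax t0 s + 1)).
  - intros; apply Hc.
  - unfold Rmin, Rmax; destruct Rle_dec; lra.
  - unfold Rmin, Rmax; destruct Rle_dec; lra.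
Qed.

Lemma dlin2 b t s : derivable_pt_lim (fun r => b * (r - t)) s b.
Proof.
  apply ofD. auto_derive; auto. ring.
Qed.

Lemma part_ii a b c d e al1 al2 al3 : continuity al1 -> continuity al2 -> continuity al3 ->
  odd_fun al1 -> odd_fun al2 -> odd_fun al3 ->
  c = - b -> d = a -> same_MRF (langford a b c d e) (sys_ii a b e al1 al2 al3).
Proof.
  intros C1 C2 C3 O1 O2 O3 Hc Hd. subst c d.
  intros t p q1 q2 M1 M2.
  destruct M1 as [lo1 [hi1 [x1 [y1 [z1 [L1 [H1 [S1 [A1 [A2 [A3 [B1 [B2 B3]]]]]]]]]]]]].
  destruct M2 as [lo2 [hi2 [x2 [y2 [z2 [L2 [H2 [S2 [G1 [G2 [G3 [K1 [K2 K3]]]]]]]]]]]]].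
  set (bw := fun r => b * (r - t)).
  assert (R1 : MRF (Fsc (fun _ => 1) (D2 a e)) t p (rot (bw (- t)) q1)).
  { apply (rot_MRF (langford a b (- b) a e) lo1 hi1 x1 y1 z1 t p q1 bw (fun _ => b)); auto.
    - intros; apply dlin2.
    - unfold bw; ring.
    - intros s _. unfold langford, cx, cy, cz; simpl. repeat split; ring. }
  set (ka := fun s => b * al1 s + al3 s).
  assert (Cka : continuity ka).
  { intros r. unfold ka. apply continuity_pt_plus; [|apply C3].
    apply continuity_pt_mult. apply continuity_pt_const. intros u v; auto. apply C1. }
  assert (Oka : odd_fun ka). { intros r. unfold ka. rewrite O1, O3. ring. }
  set (bu := fun r => b * (r - t) + RInt ka t r).
  assert (R2 : MRF (Fsc (fun s => 1 + (al1 s + al2 s)) (D2 a e)) t p (rot (bu (- t)) q2)).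
  { apply (rot_MRF (sys_ii a b e al1 al2 al3) lo2 hi2 x2 y2 z2 t p q2 bu (fun s => b + ka s)); auto.
    - intros s _. apply derivable_pt_lim_plus. apply dlin2. apply antideriv_g; auto.
    - unfold bu. rewrite point_R. ring.
    - intros s _. unfold sys_ii, ka, cx, cy, cz; simpl. repeat split; ring. }
  assert (Eb : bu (- t) = bw (- t)).
  { unfold bu, bw. rewrite odd_int; auto. ring. }
  rewrite Eb in R2.
  apply (rot_inj (bw (- t))).
  apply (TC (D2 a e) (fun s => al1 s + al2 s) (LL_D2 a e)) with t p; auto.
  - intros r. apply continuity_pt_plus; auto.
  - intros r. rewrite O1, O2. ring.
Qed.

Lemma h_const a b al1 al2 al3 al4 lo hi x y z :
  is_solution (sys_iii a b al1 al2 al3 al4) lo hi x y z ->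
  forall s, lo < s < hi ->
  derivable_pt_lim (fun r => (x r ^ 2 + y r ^ 2) * (4 * a * z r + x r ^ 2 + y r ^ 2 + 2 * z r ^ 2)) s 0.
Proof.
  intros S s Hs. destruct (S s Hs) as [D1 [D2' D3]].
  unfold sys_iii, cx, cy, cz in D1, D2', D3; simpl in D1, D2', D3.
  apply toD in D1. apply toD in D2'. apply toD in D3. apply ofD.
  ad. ring.
Qed.

Lemma part_iii a b c d e al1 al2 al3 al4 : continuity al1 -> continuity al2 -> continuity al3 ->
  continuity al4 -> odd_fun al1 -> odd_fun al2 -> odd_fun al3 -> odd_fun al4 ->
  c = - b -> d = a -> e = - 2 * a -> same_MRF (langford a b c d e) (sys_iii a b al1 al2 al3 al4).
Proof.
  intros C1 C2 C3 C4 O1 O2 O3 O4 Hc Hd He. subst c d e.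
  intros t p q1 q2 M1 M2.
  destruct M1 as [lo1 [hi1 [x1 [y1 [z1 [L1 [H1 [S1 [A1 [A2 [A3 [B1 [B2 B3]]]]]]]]]]]]].
  destruct M2 as [lo2 [hi2 [x2 [y2 [z2 [L2 [H2 [S2 [G1 [G2 [G3 [K1 [K2 K3]]]]]]]]]]]]].
  set (bw := fun r => b * (r - t)).
  assert (R1 : MRF (Fsc (fun _ => 1) (D2 a (- 2 * a))) t p (rot (bw (- t)) q1)).
  { apply (rot_MRF (langford a b (- b) a (- 2 * a)) lo1 hi1 x1 y1 z1 t p q1 bw (fun _ => b)); auto.
    - intros; apply dlin2.
    - unfold bw; ring.
    - intros s _. unfold langford, cx, cy, cz; simpl. repeat split; ring. }
  set (h0 := (cx p ^ 2 + cy p ^ 2) * (4 * a * cz p + cx p ^ 2 + cy p ^ 2 + 2 * cz p ^ 2)).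
  assert (Hh : forall s, lo2 < s < hi2 ->
     (x2 s ^ 2 + y2 s ^ 2) * (4 * a * z2 s + x2 s ^ 2 + y2 s ^ 2 + 2 * z2 s ^ 2) = h0).
  { intros s Hs. unfold h0. rewrite <- G1, <- G2, <- G3.
    apply (const_deriv0 (fun r => (x2 r ^ 2 + y2 r ^ 2) * (4 * a * z2 r + x2 r ^ 2 + y2 r ^ 2 + 2 * z2 r ^ 2)) lo2 hi2 s t).
    - intros r Hr. eapply h_const; eauto.
    - auto.
    - assert (T1 := Rle_abs t); assert (T2 := Rle_abs (-t)); rewrite Rabs_Ropp in T2; lra. }
  set (ka := fun s => b * al1 s + al3 s - h0 * al4 s).
  assert (Cka : continuity ka).
  { intros r. unfold ka. apply continuity_pt_minus; [apply continuity_pt_plus; [|apply C3]|].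
    apply continuity_pt_mult. apply continuity_pt_const. intros u v; auto. apply C1.
    apply continuity_pt_mult. apply continuity_pt_const. intros u v; auto. apply C4. }
  assert (Oka : odd_fun ka). { intros r. unfold ka. rewrite O1, O3, O4. ring. }
  set (bu := fun r => b * (r - t) + RInt ka t r).
  assert (R2 : MRF (Fsc (fun s => 1 + (al1 s + al2 s)) (D2 a (- 2 * a))) t p (rot (bu (- t)) q2)).
  { apply (rot_MRF (sys_iii a b al1 al2 al3 al4) lo2 hi2 x2 y2 z2 t p q2 bu (fun s => b + ka s)); auto.
    - intros s _. apply derivable_pt_lim_plus. apply dlin2. apply antideriv_g; auto.
    - unfold bu. rewrite point_R. ring.
    - intros s Hs. unfold ka. rewrite <- (Hh s Hs). unfold sys_iii, cx, cy, cz; simpl. repeat split; ring. }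
  assert (Eb : bu (- t) = bw (- t)).
  { unfold bu, bw. rewrite odd_int; auto. ring. }
  rewrite Eb in R2.
  apply (rot_inj (bw (- t))).
  apply (TC (D2 a (- 2 * a)) (fun s => al1 s + al2 s) (LL_D2 a (- 2 * a))) with t p; auto.
  - intros r. apply continuity_pt_plus; auto.
  - intros r. rewrite O1, O2. ring.
Qed.

Lemma PQS_const C a lo hi X Y Z : is_solution (Fsc C (D2 a (- 2 * a))) lo hi X Y Z ->
  forall s, lo < s < hi ->
  derivable_pt_lim (fun r => (4 * a * Z r + X r ^ 2 + Y r ^ 2 + 2 * Z r ^ 2) * X r ^ 2) s 0 /\
  derivable_pt_lim (fun r => (4 * a * Z r + X r ^ 2 + Y r ^ 2 + 2 * Z r ^ 2) * (X r * Y r)) s 0 /\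
  derivable_pt_lim (fun r => (4 * a * Z r + X r ^ 2 + Y r ^ 2 + 2 * Z r ^ 2) * Y r ^ 2) s 0.
Proof.
  intros S s Hs. destruct (S s Hs) as [D1 [D2' D3]].
  rewrite Fsc_x in D1. rewrite Fsc_y in D2'. rewrite Fsc_z in D3.
  unfold D2, cx, cy, cz in D1, D2', D3; simpl in D1, D2', D3.
  apply toD in D1. apply toD in D2'. apply toD in D3.
  split; [|split]; apply ofD; ad; ring.
Qed.

Definition KK (al2 al3 al4 al5 : R -> R) (P Q S : R) (s c n : R) : R :=
  al2 s + al3 s * (P * c ^ 2 + 2 * Q * c * n + S * n ^ 2)
  + al4 s * (- P * c * n + Q * (c ^ 2 - n ^ 2) + S * c * n)
  + al5 s * (P * n ^ 2 - 2 * Q * c * n + S * c ^ 2).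

Definition Ysym al2 al3 al4 al5 P Q S : system := fun s c n _ =>
  (- n * KK al2 al3 al4 al5 P Q S s c n, c * KK al2 al3 al4 al5 P Q S s c n, 0).

Lemma LL_Ysym al2 al3 al4 al5 P Q S : continuity al2 -> continuity al3 -> continuity al4 ->
  continuity al5 -> LL (Ysym al2 al3 al4 al5 P Q S).
Proof.
  intros C2 C3 C4 C5. apply LL_of_nice; unfold Ysym, KK, cx, cy, cz; simpl; solve_nice.
Qed.

Lemma KK_odd al2 al3 al4 al5 P Q S s c n : odd_fun al2 -> odd_fun al3 -> odd_fun al4 -> odd_fun al5 ->
  KK al2 al3 al4 al5 P Q S (- s) c n = - KK al2 al3 al4 al5 P Q S s c n.
Proof. intros O2 O3 O4 O5. unfold KK. rewrite O2, O3, O4, O5. ring. Qed.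

Lemma alg_iv A2 A3 A4 A5 a x y z c n P Q S : c ^ 2 + n ^ 2 = 1 ->
  P = (4 * a * z + (x * c - y * n) ^ 2 + (x * n + y * c) ^ 2 + 2 * z ^ 2) * (x * c - y * n) ^ 2 ->
  Q = (4 * a * z + (x * c - y * n) ^ 2 + (x * n + y * c) ^ 2 + 2 * z ^ 2) * ((x * c - y * n) * (x * n + y * c)) ->
  S = (4 * a * z + (x * c - y * n) ^ 2 + (x * n + y * c) ^ 2 + 2 * z ^ 2) * (x * n + y * c) ^ 2 ->
  A2 + (4 * a * z + x ^ 2 + y ^ 2 + 2 * z ^ 2) * (x ^ 2 * A3 + x * y * A4 + y ^ 2 * A5) =
  A2 + A3 * (P * c ^ 2 + 2 * Q * c * n + S * n ^ 2)
  + A4 * (- P * c * n + Q * (c ^ 2 - n ^ 2) + S * c * n)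
  + A5 * (P * n ^ 2 - 2 * Q * c * n + S * c ^ 2).
Proof.
  intros Hm -> -> ->.
  transitivity (A2 + (4 * a * z + (x ^ 2 + y ^ 2) * (c ^ 2 + n ^ 2) + 2 * z ^ 2) * (c ^ 2 + n ^ 2) ^ 2
     * (x ^ 2 * A3 + x * y * A4 + y ^ 2 * A5)).
  - rewrite Hm. ring.
  - ring.
Qed.

Lemma cp_plus f g s : continuity_pt f s -> continuity_pt g s -> continuity_pt (fun r => f r + g r) s.
Proof. intros; apply (continuity_pt_plus f g s); auto. Qed.
Lemma cp_minus f g s : continuity_pt f s -> continuity_pt g s -> continuity_pt (fun r => f r - g r) s.
Proof. intros; apply (continuity_pt_minus f g s); auto. Qed.
Lemma cp_mult f g s : continuity_pt f s -> continuity_pt g s -> continuity_pt (fun r => f r * g r) s.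
Proof. intros; apply (continuity_pt_mult f g s); auto. Qed.
Lemma cp_const c s : continuity_pt (fun _ => c) s.
Proof. apply continuity_pt_const. intros a b; auto. Qed.
Lemma cp_pow f n s : continuity_pt f s -> continuity_pt (fun r => f r ^ n) s.
Proof.
  intros H. induction n as [|n IH]; simpl. apply cp_const. apply (cp_mult f (fun r => f r ^ n)); auto.
Qed.

Ltac cpt := repeat first [ apply cp_plus | apply cp_minus | apply cp_mult | apply cp_pow | apply cp_const | assumption ].

Lemma part_iv a b c d e al1 al2 al3 al4 al5 : continuity al1 -> continuity al2 -> continuity al3 ->
  continuity al4 -> continuity al5 ->
  odd_fun al1 -> odd_fun al2 -> odd_fun al3 -> odd_fun al4 -> odd_fun al5 ->
  c = 0 -> b = 0 -> d = a -> e = - 2 * a ->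
  same_MRF (langford a b c d e) (sys_iv a al1 al2 al3 al4 al5).
Proof.
  intros C1 C2 C3 C4 C5 O1 O2 O3 O4 O5 Hc Hb Hd He. subst c b d e.
  intros t p q1 q2 M1 M2.
  assert (R1 : MRF (Fsc (fun _ => 1) (D2 a (- 2 * a))) t p q1).
  { revert M1. apply MRF_ext. intros s x y z. unfold Fsc, D2, langford.
    apply triple_eq; unfold cx, cy, cz; simpl; ring. }
  destruct M2 as [lo [hi [x [y [z [L2 [H2 [S2 [G1 [G2 [G3 [K1 [K2 K3]]]]]]]]]]]]].
  assert (Ht : lo < t < hi).
  { assert (T1 := Rle_abs t); assert (T2 := Rle_abs (-t)); rewrite Rabs_Ropp in T2; lra. }
  assert (Htm : lo < - t < hi).
  { assert (T1 := Rle_abs t); assert (T2 := Rle_abs (-t)); rewrite Rabs_Ropp in T2; lra. }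
  set (k := fun s => al2 s + (4 * a * z s + x s ^ 2 + y s ^ 2 + 2 * z s ^ 2) *
                      (x s ^ 2 * al3 s + x s * y s * al4 s + y s ^ 2 * al5 s)).
  assert (Ck : forall r, lo < r < hi -> continuity_pt k r).
  { intros r Hr. destruct (S2 r Hr) as [D1 [D2' D3]].
    apply dcont in D1. apply dcont in D2'. apply dcont in D3.
    assert (c2 := C2 r). assert (c3 := C3 r). assert (c4 := C4 r). assert (c5 := C5 r).
    unfold k. cpt. }
  set (be := fun s => RInt k t s).
  assert (Hbe : forall s, lo < s < hi -> derivable_pt_lim be s (k s)).
  { intros s Hs. apply (antideriv k lo hi); auto. }
  assert (Hbt : be t = 0) by (unfold be; apply point_R).
  assert (Hst : forall s, lo < s < hi ->
    cx (sys_iv a al1 al2 al3 al4 al5 s (x s) (y s) (z s)) = (fun r => 1 + al1 r) s * (a + z s) * x s + k s * y s /\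
    cy (sys_iv a al1 al2 al3 al4 al5 s (x s) (y s) (z s)) = (fun r => 1 + al1 r) s * (a + z s) * y s - k s * x s /\
    cz (sys_iv a al1 al2 al3 al4 al5 s (x s) (y s) (z s)) = (fun r => 1 + al1 r) s * (- 2 * a * z s - (x s ^ 2 + y s ^ 2 + z s ^ 2))).
  { intros s _. unfold sys_iv, k, cx, cy, cz; simpl. repeat split; ring. }
  assert (R2 := rot_MRF _ lo hi x y z t p q2 be k (fun r => 1 + al1 r) a (- 2 * a)
                  L2 H2 S2 G1 G2 G3 K1 K2 K3 Hbe Hbt Hst).
  assert (St := rot_sol _ lo hi x y z be k (fun r => 1 + al1 r) a (- 2 * a) S2 Hbe Hst).
  set (xt := fun r => x r * cos (be r) - y r * sin (be r)) in St.
  set (yt := fun r => x r * sin (be r) + y r * cos (be r)) in St.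
  set (P0 := (4 * a * z t + xt t ^ 2 + yt t ^ 2 + 2 * z t ^ 2) * xt t ^ 2).
  set (Q0 := (4 * a * z t + xt t ^ 2 + yt t ^ 2 + 2 * z t ^ 2) * (xt t * yt t)).
  set (S0 := (4 * a * z t + xt t ^ 2 + yt t ^ 2 + 2 * z t ^ 2) * yt t ^ 2).
  assert (Hc : forall s, lo < s < hi ->
     (4 * a * z s + xt s ^ 2 + yt s ^ 2 + 2 * z s ^ 2) * xt s ^ 2 = P0 /\
     (4 * a * z s + xt s ^ 2 + yt s ^ 2 + 2 * z s ^ 2) * (xt s * yt s) = Q0 /\
     (4 * a * z s + xt s ^ 2 + yt s ^ 2 + 2 * z s ^ 2) * yt s ^ 2 = S0).
  { intros s Hs. unfold P0, Q0, S0.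
    split; [|split];
    [ apply (const_deriv0 (fun r => (4 * a * z r + xt r ^ 2 + yt r ^ 2 + 2 * z r ^ 2) * xt r ^ 2) lo hi s t)
    | apply (const_deriv0 (fun r => (4 * a * z r + xt r ^ 2 + yt r ^ 2 + 2 * z r ^ 2) * (xt r * yt r)) lo hi s t)
    | apply (const_deriv0 (fun r => (4 * a * z r + xt r ^ 2 + yt r ^ 2 + 2 * z r ^ 2) * yt r ^ 2) lo hi s t)];
    auto; intros r Hr; destruct (PQS_const _ a lo hi xt yt z St r Hr) as [T1 [T2 T3]]; auto. }
  set (cs := fun r => cos (be r)). set (sn := fun r => sin (be r)).
  set (Y := Ysym al2 al3 al4 al5 P0 Q0 S0).
  assert (Hk : forall s, lo < s < hi -> k s = KK al2 al3 al4 al5 P0 Q0 S0 s (cs s) (sn s)).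
  { intros s Hs. destruct (Hc s Hs) as [E1 [E2 E3]]. unfold KK, k, cs, sn.
    apply alg_iv.
    - rewrite Rplus_comm. apply sc1.
    - rewrite <- E1. unfold xt, yt. ring.
    - rewrite <- E2. unfold xt, yt. ring.
    - rewrite <- E3. unfold xt, yt. ring. }
  assert (SY : is_solution Y lo hi cs sn (fun _ => 0)).
  { intros s Hs. unfold Y, Ysym, cx, cy, cz; simpl. rewrite <- (Hk s Hs).
    split; [|split].
    - replace (- sn s * k s) with (- sin (be s) * k s) by auto.
      unfold cs.
      apply (derivable_pt_lim_comp be cos s (k s) (- sin (be s))); auto. apply derivable_pt_lim_cos.
    - unfold sn. replace (cs s * k s) with (cos (be s) * k s) by (unfold cs; ring).
      apply (derivable_pt_lim_comp be sin s (k s) (cos (be s))); auto. apply derivable_pt_lim_sin.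
    - apply derivable_pt_lim_const. }
  set (m := Rmin (- lo) hi).
  assert (Hm1 := Rmin_l (- lo) hi). assert (Hm2 := Rmin_r (- lo) hi). fold m in Hm1, Hm2.
  assert (Htm' : - m < t < m).
  { assert (T1 := Rle_abs t); assert (T2 := Rle_abs (-t)); rewrite Rabs_Ropp in T2.
    unfold m, Rmin; destruct Rle_dec; lra. }
  assert (SYr : is_solution Y (- m) m (fun r => cs (- r)) (fun r => sn (- r)) (fun _ => 0)).
  { intros s Hs. destruct (SY (- s)) as [D1 [D2' D3]]; [lra|].
    unfold Y, Ysym, cx, cy, cz in D1, D2', D3 |- *; simpl in D1, D2', D3 |- *.
    split; [|split].
    - replace (- sn (- s) * KK al2 al3 al4 al5 P0 Q0 S0 s (cs (- s)) (sn (- s))) with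
        (- (- sn (- s) * KK al2 al3 al4 al5 P0 Q0 S0 (- s) (cs (- s)) (sn (- s)))).
      + apply dopp. auto.
      + rewrite KK_odd; auto. ring.
    - replace (cs (- s) * KK al2 al3 al4 al5 P0 Q0 S0 s (cs (- s)) (sn (- s))) with
        (- (cs (- s) * KK al2 al3 al4 al5 P0 Q0 S0 (- s) (cs (- s)) (sn (- s)))).
      + apply dopp. auto.
      + rewrite KK_odd; auto. ring.
    - apply derivable_pt_lim_const. }
  destruct (uniq Y (- m) m cs sn (fun _ => 0) (fun r => cs (- r)) (fun r => sn (- r)) (fun _ => 0) 0 t
              (LL_Ysym al2 al3 al4 al5 P0 Q0 S0 C2 C3 C4 C5)) as [E1 [E2 _]].
  - apply (sol_restrict _ lo hi); auto; lra.
  - auto.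
  - unfold m, Rmin; destruct Rle_dec; lra.
  - auto.
  - rewrite Ropp_0; auto.
  - rewrite Ropp_0; auto.
  - auto.
  - unfold cs, sn in E1, E2. rewrite Hbt, cos_0 in E1. rewrite Hbt, sin_0 in E2.
    assert (Rt : rot (be (- t)) q2 = q2).
    { apply triple_eq; rewrite ?rot_x, ?rot_y, ?rot_z; try (rewrite <- E1, <- E2; ring); try ring; try reflexivity. }
    rewrite Rt in R2.
    apply (TC (D2 a (- 2 * a)) al1 (LL_D2 a (- 2 * a)) C1 O1 t p); auto.
Qed.


Theorem theorem2 (a b c d e : R) (al1 al2 al3 al4 al5 : R -> R) :
  continuity al1 -> continuity al2 -> continuity al3 ->
  continuity al4 -> continuity al5 ->
  odd_fun al1 -> odd_fun al2 -> odd_fun al3 -> odd_fun al4 -> odd_fun al5 ->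
  same_MRF (langford a b c d e) (sys_i a b c d e al1) /\
  (c = - b -> d = a ->
     same_MRF (langford a b c d e) (sys_ii a b e al1 al2 al3)) /\
  (c = - b -> d = a -> e = - 2 * a ->
     same_MRF (langford a b c d e) (sys_iii a b al1 al2 al3 al4)) /\
  (c = 0 -> b = 0 -> d = a -> e = - 2 * a ->
     same_MRF (langford a b c d e) (sys_iv a al1 al2 al3 al4 al5)).
Proof.
  intros C1 C2 C3 C4 C5 O1 O2 O3 O4 O5.
  split; [apply part_i; auto|].
  split; [intros; apply part_ii; auto|].
  split; [intros; apply part_iii; auto|].
  intros; apply part_iv; auto.
Qed.
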